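(* For any class $K$ of structures, $PF\le_c K$ if and only if there is a computable Friedberg enumeration $(\mathcal{A}_n)_{n\in\omega}$ of some subclass of $K$ containing infinitely many isomorphism types.
   Context: Conventions: every structure is for a finite relational language with universe a subset of $\omega$; a class is a collection of structures for one fixed language closed under isomorphism (so subclasses are also taken closed under isomorphism). $D(\mathcal{A})$ is the atomic diagram of $\mathcal{A}$. A computable transformation from $K$ to $K'$ is a c.e. set $\Phi$ of pairs $(\alpha,\varphi)$, $\alpha$ a finite subset of the atomic diagram of a finite structure in the language of $K$, $\varphi$ an atomic sentence or negation of one in the language of $K'$, such that for every $\mathcal{A}\in K$, $\{\varphi:(\exists\alpha\subseteq D(\mathcal{A}))(\alpha,\varphi)\in\Phi\}=D(\mathcal{B})$ for some $\mathcal{B}\in K'$. A computable embedding is a computable transformation with $\mathcal{A}\cong\mathcal{A}'\iff\Phi(\mathcal{A})\cong\Phi(\mathcal{A}')$; $K\le_c K'$ means one exists. $PF$ is the class of finite prime fields (fields of prime order, in a relational language). A computable enumeration of a class $K$ is a c.e. set $\mathcal{E}$ of pairs $(n,\varphi)$ such that for each $n$, $\{\varphi:(n,\varphi)\in\mathcal{E}\}=D(\mathcal{A}_n)$ for some $\mathcal{A}_n\in K$, and every member of $K$ is isomorphic to some $\mathcal{A}_n$; it is Friedberg if each isomorphism type in $K$ is represented by exactly one $n$. *)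

(* Defs.v *)
From Stdlib Require List.
From mathcomp Require Import all_boot.

Set Implicit Arguments. Unset Strict Implicit. Unset Printing Implicit Defensive.

Inductive prf : Type :=
  | PZero
  | PSucc
  | PProj (i : nat)
  | PComp (f : prf) (gs : seq prf)
  | PPrec (f g : prf)
  | PMin (f : prf).

Inductive peval : prf -> seq nat -> nat -> Prop :=
  | ev_zero args : peval PZero args 0
  | ev_succ args : peval PSucc args (nth 0 args 0).+1
  | ev_proj i args : peval (PProj i) args (nth 0 args i)
  | ev_comp f gs args ws v :
      List.Forall2 (fun g w => peval g args w) gs ws ->
      peval f ws v -> peval (PComp f gs) args v
  | ev_prec0 f g rest v :
      peval f rest v -> peval (PPrec f g) (0 :: rest) v
  | ev_precS f g n rest u v :
      peval (PPrec f g) (n :: rest) u ->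
      peval g (n :: u :: rest) v ->
      peval (PPrec f g) (n.+1 :: rest) v
  | ev_min f args n :
      peval f (n :: args) 0 ->
      (forall m, m < n -> exists w, peval f (m :: args) w.+1) ->
      peval (PMin f) args n.

Definition ce (P : nat -> Prop) : Prop :=
  exists e : prf, forall n, P n <-> exists v, peval e [:: n] v.

Definition cpair (a b : nat) : nat := (a + b) * (a + b).+1 %/ 2 + b.

Fixpoint code_seq (s : seq nat) : nat :=
  match s with
  | nil => 0
  | x :: s' => (cpair x (code_seq s')).+1
  end.

Definition ce_by (X : Type) (code : X -> nat) (P : X -> Prop) : Prop :=
  ce (fun n => exists x, code x = n /\ P x).

(* A finite relational language: the list of arities of its relation
   symbols R_0, ..., R_{k-1}.  Equality is always available. *)
Definition language := seq nat.

(* A structure with universe a subset of omega.  Only relations of the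
   language, on tuples of the right arity from the universe, matter. *)
Record structure := Structure {
  dom : nat -> Prop;
  rel : nat -> seq nat -> Prop
}.

Inductive atom : Type :=
  | AEq (a b : nat)
  | ARel (i : nat) (args : seq nat).

(* literal: (true, a) is the atomic sentence a, (false, a) is its negation;
   constants are the natural numbers (names of elements of omega). *)
Definition literal := (bool * atom)%type.

Definition wf_atom (L : language) (a : atom) : Prop :=
  match a with
  | AEq _ _ => True
  | ARel i args => i < size L /\ size args = nth 0 L i
  end.

Definition wf_lit (L : language) (l : literal) : Prop := wf_atom L l.2.

Definition consts (a : atom) : seq nat :=
  match a with
  | AEq x y => [:: x; y]
  | ARel _ args => args
  end.

Definition holds (A : structure) (a : atom) : Prop :=
  match a with
  | AEq x y => x = y
  | ARel i args => rel A i args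
  end.

Definition diag (L : language) (A : structure) (l : literal) : Prop :=
  wf_lit L l /\ List.Forall (dom A) (consts l.2) /\
  (if l.1 then holds A l.2 else ~ holds A l.2).

Definition iso (L : language) (A B : structure) : Prop :=
  exists f : nat -> nat,
    (forall x, dom A x -> dom B (f x)) /\
    (forall x y, dom A x -> dom A y -> f x = f y -> x = y) /\
    (forall y, dom B y -> exists x, dom A x /\ f x = y) /\
    (forall i args, i < size L -> size args = nth 0 L i ->
       List.Forall (dom A) args -> (rel A i args <-> rel B i (map f args))).

Definition iso_closed (L : language) (K : structure -> Prop) : Prop :=
  forall A B, K A -> iso L A B -> K B.

Definition finite_structure (A : structure) : Prop :=
  exists n, forall x, dom A x -> x < n.

Definition code_atom (a : atom) : nat :=
  match a with
  | AEq x y => cpair 0 (cpair x y)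
  | ARel i args => cpair 1 (cpair i (code_seq args))
  end.

Definition code_lit (l : literal) : nat := cpair (nat_of_bool l.1) (code_atom l.2).

Definition code_rule (r : seq literal * literal) : nat :=
  cpair (code_seq (map code_lit r.1)) (code_lit r.2).

Definition phi_image (L : language) (L' : language)
    (Phi : seq literal * literal -> Prop) (A B : structure) : Prop :=
  forall l, (exists alpha, Phi (alpha, l) /\ List.Forall (diag L A) alpha)
            <-> diag L' B l.

Definition comp_transformation (L L' : language)
    (K K' : structure -> Prop) (Phi : seq literal * literal -> Prop) : Prop :=
  ce_by code_rule Phi /\
  (forall alpha l, Phi (alpha, l) ->
     (exists F, finite_structure F /\ List.Forall (diag L F) alpha) /\
     wf_lit L' l) /\
  (forall A, K A -> exists B, K' B /\ phi_image L L' Phi A B).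

Definition comp_embedding (L L' : language)
    (K K' : structure -> Prop) (Phi : seq literal * literal -> Prop) : Prop :=
  comp_transformation L L' K K' Phi /\
  (forall A A' B B', K A -> K A' ->
     phi_image L L' Phi A B -> phi_image L L' Phi A' B' ->
     (iso L A A' <-> iso L' B B')).

Definition le_c (L L' : language) (K K' : structure -> Prop) : Prop :=
  exists Phi, comp_embedding L L' K K' Phi.

(*    R_0 = graph of +, R_1 = graph of *, R_2 = {0}, R_3 = {1}.       *)

Definition L_field : language := [:: 3; 3; 1; 1].

Definition Zp_struct (p : nat) : structure :=
  Structure (fun x => x < p)
    (fun i args =>
       match i, args with
       | 0, a :: b :: c :: nil => (a + b) %% p = c
       | 1, a :: b :: c :: nil => (a * b) %% p = c
       | 2, a :: nil => a = 0
       | 3, a :: nil => a = 1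
       | _, _ => False
       end).

Definition PF (A : structure) : Prop :=
  exists p, prime p /\ iso L_field A (Zp_struct p).

Definition code_enum (r : nat * literal) : nat := cpair r.1 (code_lit r.2).

Definition enum_member (L : language) (E : nat * literal -> Prop)
    (n : nat) (A : structure) : Prop :=
  forall l, E (n, l) <-> diag L A l.

Definition comp_enumeration (L : language) (C : structure -> Prop)
    (E : nat * literal -> Prop) : Prop :=
  ce_by code_enum E /\
  (forall n, exists A, C A /\ enum_member L E n A) /\
  (forall A, C A -> exists n B, enum_member L E n B /\ iso L A B).

Definition friedberg_enumeration (L : language) (C : structure -> Prop)
    (E : nat * literal -> Prop) : Prop :=
  comp_enumeration L C E /\
  (forall n m An Am, enum_member L E n An -> enum_member L E m Am ->
     iso L An Am -> n = m).

Definition subclass (L : language) (C K : structure -> Prop) : Prop :=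
  iso_closed L C /\ (forall A, C A -> K A).

Definition infinitely_many_iso_types (L : language) (C : structure -> Prop)
  : Prop :=
  forall N, exists f : nat -> structure,
    (forall i, i < N -> C (f i)) /\
    (forall i j, i < N -> j < N -> iso L (f i) (f j) -> i = j).

(* Main.v *)
Require Import Defs.
From mathcomp Require Import all_boot.
From Stdlib Require Import Lia Classical IndefiniteDescription.
Set Implicit Arguments. Unset Strict Implicit. Unset Printing Implicit Defensive.

Ltac tolia := repeat match goal with
 | H : is_true (_ <= _) |- _ => move/leP: H => H
 | H : is_true (_ == _) |- _ => move/eqP: H => H
 | |- is_true (_ <= _) => apply/leP
 | |- is_true (_ == _) => apply/eqP
 end; unfold addn, subn, muln in *; lia.

Section PInd.
Variable P : prf -> Prop.
Hypothesis Hz : P PZero.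
Hypothesis Hs : P PSucc.
Hypothesis Hp : forall i, P (PProj i).
Hypothesis Hc : forall f gs, P f -> List.Forall P gs -> P (PComp f gs).
Hypothesis Hr : forall f g, P f -> P g -> P (PPrec f g).
Hypothesis Hm : forall f, P f -> P (PMin f).
Fixpoint prf_ind2 (e : prf) : P e :=
  match e with
  | PZero => Hz | PSucc => Hs | PProj i => Hp i
  | PComp f gs => Hc (prf_ind2 f)
      ((fix go gs := match gs return List.Forall P gs with
                     | nil => List.Forall_nil _
                     | g :: gs' => List.Forall_cons _ (prf_ind2 g) (go gs') end) gs)
  | PPrec f g => Hr (prf_ind2 f) (prf_ind2 g)
  | PMin f => Hm (prf_ind2 f)
  end.
End PInd.

Definition detP e := forall args v v', peval e args v -> peval e args v' -> v = v'.

Lemma forall2_det gs : List.Forall detP gs -> forall args ws ws',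
  List.Forall2 (fun g w => peval g args w) gs ws ->
  List.Forall2 (fun g w => peval g args w) gs ws' -> ws = ws'.
Proof.
elim=> [|g gs' Hg _ IH] args ws ws' H1 H2.
  by inversion H1; inversion H2.
inversion H1 as [|? y ? l' Hy Hl]; subst; inversion H2 as [|? y' ? l'' Hy' Hl']; subst.
by rewrite (Hg _ _ _ Hy Hy') (IH _ _ _ Hl Hl').
Qed.

Lemma peval_det e : detP e.
Proof.
elim/prf_ind2: e.
- by move=> a v v' H1 H2; inversion H1; inversion H2; subst.
- by move=> a v v' H1 H2; inversion H1; inversion H2; subst.
- by move=> i a v v' H1 H2; inversion H1; inversion H2; subst.
- move=> f gs Hf Hgs a v v' H1 H2.
  inversion H1 as [| | |? ? ? ws ? Hw Hfw| | |]; subst.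
  inversion H2 as [| | |? ? ? ws' ? Hw' Hfw'| | |]; subst.
  have E := forall2_det Hgs Hw Hw'. subst. exact: Hf _ _ _ Hfw Hfw'.
- move=> f g Hf Hg a v v' H1 H2.
  case: a H1 H2 => [|n rest] H1 H2; first by inversion H1.
  elim: n v v' H1 H2 => [|n IH] v v' H1 H2.
  + inversion H1; subst; inversion H2; subst. exact: Hf _ _ _ H5 H6.
  + inversion H1 as [| | | |? ? ? ? Ha|? ? ? ? u ? Hu Hgu|]; subst.
    inversion H2 as [| | | |? ? ? ? Ha'|? ? ? ? u' ? Hu' Hgu'|]; subst.
    have Eu := IH _ _ Hu Hu'. subst. exact: Hg _ _ _ Hgu Hgu'.
- move=> f Hf a v v' H1 H2; inversion H1; subst; inversion H2; subst.
  case: (ltngtP v v') => // Hlt.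
  + case: (H5 _ Hlt) => w Hw. by have := Hf _ _ _ H0 Hw.
  + case: (H3 _ Hlt) => w Hw. by have := Hf _ _ _ H4 Hw.
Qed.

Record tprf := TP { tp :> prf; den : seq nat -> nat;
                    tp_ok : forall args, peval tp args (den args) }.

Definition tzero : tprf := @TP PZero (fun _ => 0) (fun a => ev_zero a).
Definition tproj i : tprf := @TP (PProj i) (fun a => nth 0 a i) (fun a => ev_proj i a).
Definition tsucc0 : tprf := @TP PSucc (fun a => (nth 0 a 0).+1) (fun a => ev_succ a).

Lemma forall2_map (Gs : seq tprf) a :
  List.Forall2 (fun g w => peval g a w) (map tp Gs) (map (fun G => den G a) Gs).
Proof. elim: Gs => [|G Gs IH] /=; constructor => //; exact: tp_ok. Qed.

Definition tcomp (F : tprf) (Gs : seq tprf) : tprf :=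
  @TP (PComp F (map tp Gs)) (fun a => den F (map (fun G => den G a) Gs))
      (fun a => ev_comp (forall2_map Gs a) (tp_ok F _)).

Fixpoint precF (F G : seq nat -> nat) n rest :=
  match n with 0 => F rest | k.+1 => G (k :: precF F G k rest :: rest) end.

Lemma prec_ok (F G : tprf) n rest : peval (PPrec F G) (n :: rest) (precF (den F) (den G) n rest).
Proof. elim: n => [|n IH] /=; [constructor; exact: tp_ok | econstructor; [exact: IH | exact: tp_ok]]. Qed.

Definition trec (F G N : tprf) (Rs : seq tprf) : tprf :=
  @TP (PComp (PPrec F G) (map tp (N :: Rs)))
      (fun a => precF (den F) (den G) (den N a) (map (fun R => den R a) Rs))
      (fun a => ev_comp (forall2_map (N :: Rs) a) (prec_ok _ _ _ _)).

Definition mu_ok (B : tprf) := forall rs, exists i, den B (i :: rs) == 0.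

Definition muF (B : tprf) (H : mu_ok B) rs := ex_minn (H rs).

Lemma mu_ok_peval (B : tprf) (H : mu_ok B) rs : peval (PMin B) rs (muF H rs).
Proof.
rewrite /muF; case: ex_minnP => n /eqP Hn Hmin.
constructor. by rewrite -Hn; exact: tp_ok.
move=> m Hm. exists (den B (m :: rs)).-1.
rewrite prednK; first exact: tp_ok.
rewrite lt0n; apply/negP => /Hmin; rewrite leqNgt Hm //.
Qed.

Definition tmu (B : tprf) (H : mu_ok B) (Rs : seq tprf) : tprf :=
  @TP (PComp (PMin B) (map tp Rs)) (fun a => muF H (map (fun R => den R a) Rs))
      (fun a => ev_comp (forall2_map Rs a) (mu_ok_peval H _)).

Lemma den_tmu B H Rs a : den (@tmu B H Rs) a = muF H (map (fun R => den R a) Rs).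
Proof. by []. Qed.

Lemma muF_spec B H rs : den B (@muF B H rs :: rs) = 0 /\
   forall j, j < @muF B H rs -> den B (j :: rs) <> 0.
Proof.
rewrite /muF; case: ex_minnP => n /eqP Hn Hmin; split => // j Hj Hz.
have := Hmin j (introT eqP Hz). by rewrite leqNgt Hj.
Qed.

Lemma muF_eq B H rs n : den B (n :: rs) = 0 -> (forall j, j < n -> den B (j :: rs) <> 0) ->
  @muF B H rs = n.
Proof.
move=> H1 H2; have [H3 H4] := muF_spec H rs.
case: (ltngtP (muF H rs) n) => // Hl.
- by have := H2 _ Hl.
- by have := H4 _ Hl.
Qed.

Definition tS (G : tprf) := tcomp tsucc0 [:: G].
Arguments tS : simpl never.
Arguments tcomp : simpl never. Arguments trec : simpl never.
Lemma precF0 F G rest : precF F G 0 rest = F rest. Proof. by []. Qed.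
Lemma precFS F G n rest : precF F G n.+1 rest = G (n :: precF F G n rest :: rest). Proof. by []. Qed.
Ltac sm := cbn [map nth].
Lemma den_tS G a : den (tS G) a = (den G a).+1. Proof. by []. Qed.
Lemma den_tproj i a : den (tproj i) a = nth 0 a i. Proof. by []. Qed.
Lemma den_tzero a : den tzero a = 0. Proof. by []. Qed.
Lemma den_tcomp F Gs a : den (tcomp F Gs) a = den F (map (fun G => den G a) Gs). Proof. by []. Qed.
Lemma den_trec F G N Rs a : den (trec F G N Rs) a =
  precF (den F) (den G) (den N a) (map (fun R => den R a) Rs). Proof. by []. Qed.

Fixpoint tconst k := match k with 0 => tzero | k.+1 => tS (tconst k) end.
Arguments tconst : simpl never.
Lemma den_tconst k a : den (tconst k) a = k.
Proof. elim: k => [//|k IH]. exact: (f_equal S IH). Qed.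

Definition tadd x y := trec (tproj 0) (tS (tproj 1)) y [:: x].
Arguments tadd : simpl never.
Lemma den_tadd x y a : den (tadd x y) a = den x a + den y a.
Proof. rewrite /tadd den_trec; sm. elim: (den y a) => [|n IH]; rewrite ?precF0 ?precFS ?den_tS ?den_tproj; sm; by rewrite ?addn0 ?IH ?addnS. Qed.

Definition tpred x := trec tzero (tproj 0) x [::].
Arguments tpred : simpl never.
Lemma den_tpred x a : den (tpred x) a = (den x a).-1.
Proof. rewrite /tpred den_trec. by case: (den x a). Qed.

Definition tsub x y := trec (tproj 0) (tpred (tproj 1)) y [:: x].
Arguments tsub : simpl never.
Lemma den_tsub x y a : den (tsub x y) a = den x a - den y a.
Proof. rewrite /tsub den_trec; sm. elim: (den y a) => [|n IH]; rewrite ?precF0 ?precFS ?den_tpred ?den_tproj; sm; rewrite ?subn0 // IH subnS //. Qed.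

Definition tmul x y := trec tzero (tadd (tproj 1) (tproj 2)) y [:: x].
Arguments tmul : simpl never.
Lemma den_tmul x y a : den (tmul x y) a = den x a * den y a.
Proof. rewrite /tmul den_trec; sm. elim: (den y a) => [|n IH]; rewrite ?precF0 ?precFS ?den_tadd ?den_tproj; sm; rewrite ?muln0 // IH mulnS addnC //. Qed.

Definition teq x y := tadd (tsub x y) (tsub y x).
Arguments teq : simpl never.
Lemma den_teq x y a : (den (teq x y) a == 0) = (den x a == den y a).
Proof. rewrite /teq den_tadd !den_tsub addn_eq0 !subn_eq0 eqn_leq //. Qed.
Definition tle x y := tsub x y.
Arguments tle : simpl never.
Lemma den_tle x y a : (den (tle x y) a == 0) = (den x a <= den y a).
Proof. by rewrite /tle den_tsub subn_eq0. Qed.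
Definition tlt x y := tsub (tS x) y.
Arguments tlt : simpl never.
Lemma den_tlt x y a : (den (tlt x y) a == 0) = (den x a < den y a).
Proof. by rewrite /tlt den_tsub subn_eq0. Qed.
Definition tnot t := tsub (tconst 1) t.
Arguments tnot : simpl never.
Lemma den_tnot t a : den (tnot t) a = (den t a == 0).
Proof. rewrite /tnot den_tsub den_tconst. by case: (den t a). Qed.
Definition tif t x y := tadd (tmul (tnot t) x) (tmul (tnot (tnot t)) y).
Arguments tif : simpl never.
Lemma den_tif t x y a : den (tif t x y) a = if den t a == 0 then den x a else den y a.
Proof. rewrite /tif den_tadd !den_tmul !den_tnot. case: (den t a) => [|k] /=; rewrite ?mul1n ?mul0n ?addn0 ?add0n //. Qed.

Fixpoint Tn n := match n with 0 => 0 | k.+1 => Tn k + k.+1 end.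
Definition tT x := trec tzero (tadd (tproj 1) (tS (tproj 0))) x [::].
Arguments tT : simpl never.
Lemma den_tT x a : den (tT x) a = Tn (den x a).
Proof. rewrite /tT den_trec. elim: (den x a) => // n IH. by rewrite precFS den_tadd den_tS !den_tproj; sm; rewrite IH. Qed.

Fixpoint sumF (f : nat -> nat) n := match n with 0 => 0 | k.+1 => sumF f k + f k end.
Lemma sumF_eq0P f n : sumF f n = 0 <-> forall i, i < n -> f i = 0.
Proof.
elim: n => [|n IH] /=; first by split => // _ i.
split => [/eqP|H].
  rewrite addn_eq0 => /andP [/eqP /IH H1 /eqP H2] i; rewrite ltnS leq_eqVlt => /orP [/eqP ->//|]; exact: H1.
rewrite (proj2 IH) ?H //. move=> i Hi; apply: H; exact: ltnW.
Qed.

Lemma map_shift2 k acc rest :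
  map (fun R => den R (k :: acc :: rest)) [seq tproj j.+2 | j <- iota 0 (size rest)] = rest.
Proof. rewrite -map_comp /comp /=. exact: mkseq_nth. Qed.

Definition tbsum (B N : tprf) (Rs : seq tprf) :=
  trec tzero (tadd (tproj 1) (tcomp B (tproj 0 :: [seq tproj j.+2 | j <- iota 0 (size Rs)]))) N Rs.
Lemma den_tbsum B N Rs a : den (tbsum B N Rs) a =
  sumF (fun i => den B (i :: map (fun R => den R a) Rs)) (den N a).
Proof.
rewrite /tbsum den_trec. elim: (den N a) => // n IH.
rewrite precFS den_tadd den_tcomp den_tproj; sm. rewrite den_tproj; sm.
rewrite IH; by rewrite -(size_map (fun R => den R a)) map_shift2.
Qed.

Definition shiftRs (Rs : seq tprf) := [seq tproj j.+1 | j <- iota 0 (size Rs)].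
Lemma map_shift1 k rest :
  map (fun R => den R (k :: rest)) [seq tproj j.+1 | j <- iota 0 (size rest)] = rest.
Proof. rewrite -map_comp /comp /=. exact: mkseq_nth. Qed.
Arguments tbsum : simpl never. Arguments tmu : simpl never.

Lemma Tn2 s : s * s.+1 = Tn s * 2.
Proof. elim: s => //= s IH. rewrite mulnDl -IH. tolia. Qed.
Lemma cpairE a b : cpair a b = Tn (a + b) + b.
Proof. by rewrite /cpair Tn2 mulnK. Qed.
Lemma Tn_mono m n : m <= n -> Tn m <= Tn n.
Proof. elim: n => [|n IH]; first by rewrite leqn0 => /eqP ->. rewrite leq_eqVlt => /orP [/eqP ->//|/IH] /= H. tolia. Qed.
Lemma Tn_ge n : n <= Tn n.
Proof. elim: n => //= n IH. tolia. Qed.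

Definition Dbody := tlt (tproj 1) (tT (tS (tproj 0))).
Lemma Dbody_ok : mu_ok Dbody.
Proof.
move=> rs; exists (nth 0 rs 0). rewrite /Dbody den_tlt den_tT den_tS !den_tproj; sm. exact: Tn_ge.
Qed.
Definition tD x := tmu Dbody_ok [:: x].
Definition Dz z := muF Dbody_ok [:: z].
Lemma den_tD x a : den (tD x) a = Dz (den x a). Proof. by []. Qed.
Lemma Dz_spec z : Tn (Dz z) <= z < Tn (Dz z).+1.
Proof.
have [H1 H2] := muF_spec Dbody_ok [:: z]. rewrite -/(Dz z) in H1 H2.
move/eqP: H1; rewrite /Dbody den_tlt den_tT den_tS !den_tproj; sm => ->; rewrite andbT.
case E: (Dz z) => [|k] //. have /eqP := H2 k ltac:(by rewrite E).
rewrite /Dbody den_tlt den_tT den_tS !den_tproj; sm. by rewrite -leqNgt.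
Qed.
Lemma Dz_eq z s : Tn s <= z < Tn s.+1 -> Dz z = s.
Proof.
move=> /andP [H1 H2]. apply: muF_eq.
  apply/eqP; rewrite /Dbody den_tlt den_tT den_tS !den_tproj //.
move=> j Hj; apply/eqP; rewrite /Dbody den_tlt den_tT den_tS !den_tproj; sm; rewrite -leqNgt.
apply: leq_trans H1; exact: Tn_mono.
Qed.

Definition sndc z := z - Tn (Dz z).
Definition fstc z := Dz z - sndc z.
Definition tsnd x := tsub x (tT (tD x)).
Definition tfst x := tsub (tD x) (tsnd x).
Definition tcpair x y := tadd (tT (tadd x y)) y.
Lemma den_tsnd x a : den (tsnd x) a = sndc (den x a).
Proof. by rewrite /tsnd den_tsub den_tT den_tD. Qed.
Lemma den_tfst x a : den (tfst x) a = fstc (den x a).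
Proof. by rewrite /tfst den_tsub den_tsnd den_tD. Qed.
Lemma den_tcpair x y a : den (tcpair x y) a = cpair (den x a) (den y a).
Proof. by rewrite /tcpair den_tadd den_tT den_tadd cpairE. Qed.

Lemma Dz_cpair a b : Dz (cpair a b) = a + b.
Proof. apply: Dz_eq; rewrite cpairE /=. apply/andP; split; tolia. Qed.
Lemma sndc_cpair a b : sndc (cpair a b) = b.
Proof. rewrite /sndc Dz_cpair cpairE; tolia. Qed.
Lemma fstc_cpair a b : fstc (cpair a b) = a.
Proof. rewrite /fstc sndc_cpair Dz_cpair; tolia. Qed.
Lemma cpair_surj z : cpair (fstc z) (sndc z) = z.
Proof.
have /andP [H1 H2] := Dz_spec z. rewrite /= in H2.
rewrite cpairE /fstc /sndc. have -> : Dz z - (z - Tn (Dz z)) + (z - Tn (Dz z)) = Dz z by tolia.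
tolia.
Qed.
Lemma sndc_le z : sndc z <= z. Proof. by rewrite /sndc leq_subr. Qed.
Lemma fstc_le z : fstc z <= z.
Proof. have H := cpair_surj z; rewrite cpairE in H. have H2 := Tn_ge (fstc z + sndc z). tolia. Qed.
Lemma cpair_inj a b a' b' : cpair a b = cpair a' b' -> a = a' /\ b = b'.
Proof. move=> H. have := congr1 fstc H; have := congr1 sndc H. by rewrite !fstc_cpair !sndc_cpair. Qed.
Lemma fstc0 : fstc 0 = 0. Proof. by have /(leq_trans (fstc_le 0)) := leqnn 0; rewrite leqn0 => /eqP. Qed.
Lemma sndc0 : sndc 0 = 0. Proof. by have /(leq_trans (sndc_le 0)) := leqnn 0; rewrite leqn0 => /eqP. Qed.
Lemma cpair_geb a b : b <= cpair a b. Proof. rewrite cpairE; exact: leq_addl. Qed.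
Lemma cpair_gea a b : a <= cpair a b. Proof. rewrite cpairE; have H2 := Tn_ge (a + b). tolia. Qed.

Definition tcons x c := tS (tcpair x c).
Lemma den_tcons x c a : den (tcons x c) a = (cpair (den x a) (den c a)).+1.
Proof. by rewrite /tcons den_tS den_tcpair. Qed.
Definition headc c := fstc c.-1.
Definition tailc c := sndc c.-1.
Definition theadc c := tfst (tpred c).
Definition ttail c := tsnd (tpred c).
Lemma den_theadc c a : den (theadc c) a = headc (den c a).
Proof. by rewrite /theadc den_tfst den_tpred. Qed.
Lemma den_ttail c a : den (ttail c) a = tailc (den c a).
Proof. by rewrite /ttail den_tsnd den_tpred. Qed.
Lemma headc_code s : headc (code_seq s) = nth 0 s 0.
Proof. case: s => [|x s] /=; by rewrite /headc ?fstc0 ?fstc_cpair. Qed.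
Lemma tailc_code s : tailc (code_seq s) = code_seq (behead s).
Proof. case: s => [|x s] /=; by rewrite /tailc ?sndc0 ?sndc_cpair. Qed.
Definition ttailn i c := trec (tproj 0) (ttail (tproj 1)) i [:: c].
Lemma den_ttailn i c a : den (ttailn i c) a = iter (den i a) tailc (den c a).
Proof.
rewrite /ttailn den_trec; sm. elim: (den i a) => // n IH.
by rewrite precFS den_ttail den_tproj; sm; rewrite IH.
Qed.
Lemma iter_tailc_code i s : iter i tailc (code_seq s) = code_seq (drop i s).
Proof.
elim: i s => [|i IH] s; first by rewrite drop0.
by rewrite iterSr tailc_code IH; case: s => //=; rewrite drop_nil.
Qed.
Definition nthc i c := headc (iter i tailc c).
Definition tnthc i c := theadc (ttailn i c).
Lemma den_tnthc i c a : den (tnthc i c) a = nthc (den i a) (den c a).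
Proof. by rewrite /tnthc den_theadc den_ttailn. Qed.
Lemma nthc_code i s : nthc i (code_seq s) = nth 0 s i.
Proof. by rewrite /nthc iter_tailc_code headc_code nth_drop addn0. Qed.

Lemma code_surj c : exists s, code_seq s = c.
Proof.
elim: c {-2}c (leqnn c) => [|n IH] c Hc.
  by exists [::]; move: Hc; rewrite leqn0 => /eqP ->.
case: c Hc => [|c] Hc; first by exists [::].
have [s Hs] := IH (sndc c) (leq_trans (sndc_le c) Hc).
exists (fstc c :: s) => /=. by rewrite Hs cpair_surj.
Qed.

Lemma size_code s : size s <= code_seq s.
Proof. elim: s => //= x s IH. have H2 := cpair_geb x (code_seq s). tolia. Qed.

Definition sizebody := ttailn (tproj 0) (tproj 1).
Lemma sizebody_ok : mu_ok sizebody.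
Proof.
move=> rs; have [s Hs] := code_surj (nth 0 rs 0). exists (size s).
rewrite /sizebody den_ttailn !den_tproj; sm. by rewrite -Hs iter_tailc_code drop_size.
Qed.
Definition tsizec c := tmu sizebody_ok [:: c].
Lemma den_tsizec_code c a s : den c a = code_seq s -> den (tsizec c) a = size s.
Proof.
move=> Hc. rewrite /tsizec den_tmu; sm. rewrite Hc. apply: muF_eq.
  by rewrite /sizebody den_ttailn !den_tproj; sm; rewrite iter_tailc_code drop_size.
move=> j Hj. rewrite /sizebody den_ttailn !den_tproj; sm; rewrite iter_tailc_code.
by case E: (drop j s) => //; move: (congr1 size E); rewrite size_drop /=; move/eqP; rewrite subn_eq0 leqNgt Hj.
Qed.
Arguments tD : simpl never. Arguments tsnd : simpl never. Arguments tfst : simpl never.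
Arguments tcpair : simpl never. Arguments tcons : simpl never. Arguments theadc : simpl never.
Arguments ttail : simpl never. Arguments ttailn : simpl never. Arguments tnthc : simpl never.
Arguments tsizec : simpl never. Arguments tif : simpl never. Arguments tT : simpl never.
Arguments tnot : simpl never. Arguments tconst : simpl never.

Ltac dn := do 6 (rewrite ?den_tadd ?den_tcomp ?den_tproj ?den_tfst ?den_tsnd ?den_tnthc
   ?den_tconst ?den_tcons ?den_theadc ?den_ttail ?den_tbsum ?den_tnot ?den_tS ?den_tzero; sm).

Fixpoint goF (ch : prf -> tprf) (gs : seq prf) (j : nat) (Cg W A : tprf) : tprf :=
  match gs with
  | nil => tzero
  | g :: gs' => tadd (tcomp (ch g) [:: tnthc (tconst j) Cg; A; tnthc (tconst j) W])
                     (goF ch gs' j.+1 Cg W A)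
  end.

Fixpoint wsL (W : tprf) (j k : nat) : tprf :=
  match k with 0 => tzero | k'.+1 => tcons (tnthc (tconst j) W) (wsL W j.+1 k') end.

Definition precBody (chg : tprf) :=
  (* env: i :: c :: a :: v *)
  tcomp chg [:: tnthc (tproj 0) (tsnd (tsnd (tproj 1)));
                tcons (tproj 0) (tcons (tnthc (tproj 0) (tfst (tproj 1))) (ttail (tproj 2)));
                tnthc (tS (tproj 0)) (tfst (tproj 1))].
Definition minBody (chf : tprf) :=
  tcomp chf [:: tnthc (tproj 0) (tsnd (tsnd (tproj 1)));
                tcons (tproj 0) (tproj 2);
                tS (tnthc (tproj 0) (tfst (tsnd (tproj 1))))].

Fixpoint chk (e : prf) : tprf :=
  match e with
  | PZero => tproj 2
  | PSucc => teq (tproj 2) (tS (theadc (tproj 1)))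
  | PProj i => teq (tproj 2) (tnthc (tconst i) (tproj 1))
  | PComp f gs =>
      tadd (tcomp (chk f) [:: tfst (tsnd (tproj 0)); wsL (tfst (tproj 0)) 0 (size gs); tproj 2])
           (goF chk gs 0 (tsnd (tsnd (tproj 0))) (tfst (tproj 0)) (tproj 1))
  | PPrec f g =>
      tadd (tnot (tproj 1))
      (tadd (tcomp (chk f) [:: tfst (tsnd (tproj 0)); ttail (tproj 1); tnthc (tconst 0) (tfst (tproj 0))])
      (tadd (teq (tproj 2) (tnthc (theadc (tproj 1)) (tfst (tproj 0))))
            (tbsum (precBody (chk g)) (theadc (tproj 1)) [:: tproj 0; tproj 1; tproj 2])))
  | PMin f =>
      tadd (tcomp (chk f) [:: tfst (tproj 0); tcons (tproj 2) (tproj 1); tzero])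
           (tbsum (minBody (chk f)) (tproj 2) [:: tproj 0; tproj 1; tproj 2])
  end.

Lemma den_wsL W j k env : den (wsL W j k) env = code_seq [seq nthc i (den W env) | i <- iota j k].
Proof. elim: k j => [|k IH] j //. cbn [wsL iota map code_seq]. by rewrite den_tcons den_tnthc den_tconst IH. Qed.

Lemma den_goF ch gs m Cg W A env : den (goF ch gs m Cg W A) env = 0 <->
  forall j, j < size gs -> den (ch (nth PZero gs j))
     [:: nthc (m + j) (den Cg env); den A env; nthc (m + j) (den W env)] = 0.
Proof.
elim: gs m => [|g gs IH] m; first by split => // _ j.
cbn [goF size]. rewrite den_tadd den_tcomp; sm; rewrite !den_tnthc !den_tconst.
split.
  move/eqP; rewrite addn_eq0 => /andP [/eqP H1 /eqP H2] jj.
  move: H2 => /IH H2. case: jj => [|jj] Hj; first by rewrite addn0.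
  by rewrite addnS -addSn; apply: H2.
move=> H; apply/eqP; rewrite addn_eq0; apply/andP; split; apply/eqP.
  by have := H 0 isT; rewrite addn0.
apply/IH => j Hj. rewrite addSn -addnS. exact: H j.+1 Hj.
Qed.

Lemma Forall_nth (P : prf -> Prop) gs j : List.Forall P gs -> j < size gs -> P (nth PZero gs j).
Proof. move=> H; elim: H j => // g gs' Hg _ IH [|j] //= Hj; exact: IH. Qed.

Lemma Forall2_nth (R : prf -> nat -> Prop) gs ws : List.Forall2 R gs ws ->
  size ws = size gs /\ forall j, j < size gs -> R (nth PZero gs j) (nth 0 ws j).
Proof.
elim=> [|g w gs' ws' Hgw _ [IH1 IH2]] /=; first by split => // j.
split; first by rewrite IH1. by case=> // j /IH2.
Qed.

Lemma nth_Forall2 (R : prf -> nat -> Prop) gs ws : size ws = size gs ->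
  (forall j, j < size gs -> R (nth PZero gs j) (nth 0 ws j)) -> List.Forall2 R gs ws.
Proof.
elim: gs ws => [|g gs IH] [|w ws] //= Hs H; constructor.
  exact: (H 0).
apply: IH; first by case: Hs. move=> j Hj; exact: (H j.+1).
Qed.

Lemma choice_seq (P : nat -> nat -> Prop) k : (forall j, j < k -> exists x, P j x) ->
  exists xs, size xs = k /\ forall j, j < k -> P j (nth 0 xs j).
Proof.
elim: k => [|k IH] H; first by exists [::].
have [xs [Hs Hx]] := IH (fun j Hj => H j (ltnW Hj)).
have [x Hxk] := H k (ltnSn k).
exists (rcons xs x); split; first by rewrite size_rcons Hs.
move=> j; rewrite ltnS leq_eqVlt => /orP [/eqP ->|Hj].
  by rewrite nth_rcons Hs ltnn eqxx.
by rewrite nth_rcons Hs Hj; apply: Hx.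
Qed.

Lemma map_nthc_code s : [seq nthc i (code_seq s) | i <- iota 0 (size s)] = s.
Proof.
rewrite -[RHS](mkseq_nth 0 s) /mkseq; apply: eq_map => i. exact: nthc_code.
Qed.

Definition soundP e := forall c args v, den (chk e) [:: c; code_seq args; v] = 0 -> peval e args v.
Definition complP e := forall args v, peval e args v -> exists c, den (chk e) [:: c; code_seq args; v] = 0.

Lemma eq0_add a b : a + b = 0 <-> a = 0 /\ b = 0.
Proof. split; [move/eqP; rewrite addn_eq0 => /andP [/eqP -> /eqP ->] // | by case=> -> ->]. Qed.

Lemma den_env0 c a v : den (tproj 0) [:: c; a; v] = c. Proof. by []. Qed.
Lemma den_env1 c a v : den (tproj 1) [:: c; a; v] = a. Proof. by []. Qed.
Lemma den_env2 c a v : den (tproj 2) [:: c; a; v] = v. Proof. by []. Qed.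

Lemma chk_sound e : soundP e.
Proof.
elim/prf_ind2: e.
- move=> c args v; cbn [chk]; rewrite den_env2 => ->; constructor.
- move=> c args v; cbn [chk]; move/eqP; rewrite den_teq den_env2 den_tS den_theadc den_env1 headc_code => /eqP ->.
  constructor.
- move=> i c args v; cbn [chk]; move/eqP; rewrite den_teq den_env2 den_tnthc den_tconst den_env1 nthc_code => /eqP ->.
  constructor.
- move=> f gs Hf Hgs c args v; cbn [chk]; rewrite den_tadd => /eq0_add [H1 H2].
  move: H2 => /den_goF H2. rewrite den_tcomp in H1; cbn [map nth] in H1.
  rewrite den_tfst den_tsnd den_env0 den_wsL den_tfst den_env0 den_env2 in H1.
  apply: (ev_comp (ws := [seq nthc i (fstc c) | i <- iota 0 (size gs)])); last exact: Hf H1.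
  apply: nth_Forall2; first by rewrite size_map size_iota.
  move=> j Hj. rewrite (nth_map 0) ?size_iota // nth_iota // add0n.
  have := H2 j Hj. rewrite !den_tsnd !den_tfst den_env0 den_env1 add0n.
  exact: (Forall_nth Hgs Hj).
- move=> f g Hf Hg c args v; cbn [chk]; rewrite den_tadd => /eq0_add [H0]; rewrite den_tadd => /eq0_add [H1]; rewrite den_tadd => /eq0_add [H2 H3].
  case: args H0 H1 H2 H3 => [|n rest] H0 H1 H2 H3.
    by move: H0; rewrite den_tnot den_env1.
  rewrite den_tcomp in H1; cbn [map nth] in H1. rewrite den_tfst den_tsnd den_env0 den_ttail den_env1 den_tnthc den_tconst den_tfst den_env0 tailc_code in H1.
  move: H2 => /eqP; rewrite den_teq den_env2 den_tnthc den_theadc den_env1 headc_code den_tfst den_env0 => /eqP H2.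
  rewrite den_tbsum den_theadc den_env1 headc_code in H3. move/sumF_eq0P: H3 => H3.
  rewrite H2 /=.
  suff: forall i, i <= n -> peval (PPrec f g) (i :: rest) (nthc i (fstc c)) by apply.
  elim=> [|i IH] Hi; first by constructor; exact: Hf H1.
  apply: ev_precS (IH (ltnW Hi)) _.
  have := H3 i Hi. rewrite /precBody den_tcomp; sm.
  rewrite !den_tnthc !den_tproj; sm. rewrite !den_tsnd !den_tcons !den_tnthc den_tS !den_tproj; sm.
  rewrite !den_tfst den_ttail !den_tproj; sm. rewrite tailc_code.
  have -> : (cpair i (cpair (nthc i (fstc c)) (code_seq rest)).+1).+1 = code_seq [:: i, nthc i (fstc c) & rest] by [].
  exact: Hg.
- move=> f Hf c args v; cbn [chk]; rewrite den_tadd => /eq0_add [H1 H2].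
  rewrite den_tcomp in H1; cbn [map nth] in H1. rewrite den_tfst den_env0 den_tcons den_env2 den_env1 den_tzero in H1.
  rewrite den_tbsum den_env2 in H2; move/sumF_eq0P: H2 => H2.
  constructor.
    exact: (Hf _ (v :: args) _ H1).
  move=> m Hm. exists (nthc m (fstc (sndc c))).
  have := H2 m Hm. rewrite /minBody den_tcomp; sm.
  rewrite !den_tnthc !den_tproj; sm. rewrite !den_tsnd !den_tcons den_tS !den_tnthc !den_tproj; sm.
  rewrite !den_tfst !den_tsnd !den_tproj; sm.
  have -> : (cpair m (code_seq args)).+1 = code_seq (m :: args) by [].
  exact: Hf.
Qed.

Lemma prec_trace f g n rest v : peval (PPrec f g) (n :: rest) v ->
  exists us, size us = n.+1 /\ nth 0 us n = v /\ peval f rest (nth 0 us 0) /\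
     forall i, i < n -> peval g (i :: nth 0 us i :: rest) (nth 0 us i.+1).
Proof.
elim: n v => [|n IH] v H.
  inversion H; subst. by exists [:: v].
inversion H as [| | | |? ? ? ? Ha|? ? ? ? u ? Hu Hgu|]; subst.
have [us [Hs [Hn [H0 Hi]]]] := IH _ Hu.
exists (rcons us v); split; first by rewrite size_rcons Hs.
split; first by rewrite nth_rcons Hs ltnn eqxx.
split; first by rewrite nth_rcons Hs.
move=> i; rewrite ltnS leq_eqVlt => /orP [/eqP ->|Hlt].
  by rewrite !nth_rcons Hs ltnSn ltnn eqxx Hn.
have h1 : i < n.+1 by apply: ltnW; rewrite ltnS.
have h2 : i.+1 < n.+1 by rewrite ltnS.
rewrite !nth_rcons Hs h1 h2; exact: Hi.
Qed.

Lemma chk_complete e : complP e.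
Proof.
elim/prf_ind2: e.
- move=> args v H; inversion H; subst; by exists 0.
- move=> args v H; inversion H; subst; exists 0; cbn [chk]; apply/eqP.
  by rewrite den_teq den_env2 den_tS den_theadc den_env1 headc_code.
- move=> i args v H; inversion H; subst; exists 0; cbn [chk]; apply/eqP.
  by rewrite den_teq den_env2 den_tnthc den_tconst den_env1 nthc_code.
- move=> f gs Hf Hgs args v H.
  inversion H as [| | |? ? ? ws ? Hw Hfw| | |]; subst.
  have [Hs Hj] := Forall2_nth Hw.
  have [cf Hcf] := Hf _ _ Hfw.
  have [cs [Hcs Hc]] := @choice_seq (fun j x => den (chk (nth PZero gs j)) [:: x; code_seq args; nth 0 ws j] = 0)
    (size gs) (fun j Hj' => Forall_nth Hgs Hj' _ _ (Hj j Hj')).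
  exists (cpair (code_seq ws) (cpair cf (code_seq cs))); cbn [chk].
  rewrite den_tadd; apply/eq0_add; split.
    rewrite den_tcomp; sm. rewrite !den_tfst !den_tsnd den_env0 den_wsL den_tfst den_env0 den_env2.
    by rewrite sndc_cpair !fstc_cpair -Hs map_nthc_code.
  apply/den_goF => j Hj'. rewrite !den_tsnd !den_tfst den_env0 den_env1 !sndc_cpair !fstc_cpair add0n !nthc_code.
  exact: Hc.
- move=> f g Hf Hg args v H.
  case: args H => [|n rest] H; first by inversion H.
  have [us [Hs [Hn [H0 Hi]]]] := prec_trace H.
  have [cf Hcf] := Hf _ _ H0.
  have [cs [Hcs Hc]] := @choice_seq (fun i x => den (chk g) [:: x; code_seq (i :: nth 0 us i :: rest); nth 0 us i.+1] = 0)
    n (fun i Hi' => Hg _ _ (Hi i Hi')).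
  exists (cpair (code_seq us) (cpair cf (code_seq cs))); cbn [chk].
  rewrite den_tadd; apply/eq0_add; split; first by rewrite den_tnot den_env1.
  rewrite den_tadd; apply/eq0_add; split.
    rewrite den_tcomp; sm. rewrite den_tfst den_tsnd den_env0 den_ttail den_env1 den_tnthc den_tconst den_tfst den_env0.
    by rewrite tailc_code fstc_cpair sndc_cpair fstc_cpair nthc_code.
  rewrite den_tadd; apply/eq0_add; split.
    apply/eqP; rewrite den_teq den_env2 den_tnthc den_theadc den_env1 headc_code den_tfst den_env0.
    by rewrite fstc_cpair nthc_code Hn.
  rewrite den_tbsum den_theadc den_env1 headc_code; apply/sumF_eq0P => i Hi'.
  rewrite /precBody den_tcomp; sm.
  rewrite !den_tnthc !den_tproj; sm. rewrite !den_tsnd !den_tcons !den_tnthc den_tS !den_tproj; sm.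
  rewrite !den_tfst den_ttail !den_tproj; sm. rewrite tailc_code !sndc_cpair !fstc_cpair !nthc_code.
  exact: Hc.
- move=> f Hf args v H.
  inversion H as [| | | | | |? ? ? Hz Hlt]; subst.
  have [cf0 Hcf0] := Hf _ _ Hz.
  have [ws [Hws Hw]] := @choice_seq (fun m w => peval f (m :: args) w.+1) v Hlt.
  have [cs [Hcs Hc]] := @choice_seq (fun m x => den (chk f) [:: x; code_seq (m :: args); (nth 0 ws m).+1] = 0)
    v (fun m Hm => Hf _ _ (Hw m Hm)).
  exists (cpair cf0 (cpair (code_seq ws) (code_seq cs))); cbn [chk].
  rewrite den_tadd; apply/eq0_add; split.
    rewrite den_tcomp; sm. rewrite den_tfst den_env0 den_tcons den_env2 den_env1 den_tzero fstc_cpair.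
    exact: Hcf0.
  rewrite den_tbsum den_env2; apply/sumF_eq0P => m Hm.
  rewrite /minBody den_tcomp; sm.
  rewrite !den_tnthc !den_tproj; sm. rewrite !den_tsnd !den_tcons den_tS !den_tnthc !den_tproj; sm.
  rewrite !den_tfst !den_tsnd !den_tproj; sm. rewrite !sndc_cpair !fstc_cpair !nthc_code.
  exact: Hc.
Qed.

Lemma chk_spec e args : (exists v, peval e args v) <->
  (exists c v, den (chk e) [:: c; code_seq args; v] = 0).
Proof.
split => [[v /chk_complete [c Hc]]|[c [v /chk_sound H]]]; [by exists c, v | by exists v].
Qed.

Lemma modS_alt x p : 0 < p -> x.+1 %% p = if (x %% p).+1 == p then 0 else (x %% p).+1.
Proof.
move=> Hp. rewrite {1}(divn_eq x p) -addnS modnMDl.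
case: eqP => [->|Hne]; first exact: modnn.
apply: modn_small. have := ltn_pmod x Hp. rewrite leq_eqVlt => /orP [/eqP //|//].
Qed.

Definition tmod x p := trec tzero (tif (teq (tS (tproj 1)) (tproj 2)) tzero (tS (tproj 1))) x [:: p].
Arguments tmod : simpl never.
Lemma den_tmod x p a : 0 < den p a -> den (tmod x p) a = den x a %% den p a.
Proof.
move=> Hp. rewrite /tmod den_trec; sm. elim: (den x a) => [|n IH]; first by rewrite mod0n.
rewrite precFS den_tif den_tzero den_tS !den_tproj; sm. rewrite den_teq den_tS !den_tproj; sm.
by rewrite IH modS_alt.
Qed.

Definition primeBody := tif (tlt (tconst 1) (tproj 0)) (tnot (tmod (tproj 1) (tproj 0))) tzero.
Definition tprime M := tadd (tlt (tconst 1) M) (tbsum primeBody M [:: M]).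
Arguments tprime : simpl never.
Lemma den_tprime M a : (den (tprime M) a == 0) = prime (den M a).
Proof.
rewrite /tprime den_tadd addn_eq0 den_tlt den_tconst den_tbsum.
set m := den M a.
apply/andP/idP => [[H1 /eqP /sumF_eq0P H2]|Hp].
  apply/primeP; split => // d Hd. rewrite /= .
  case: (ltngtP d 1) => [Hd1|Hd1|->//].
    move: Hd1; rewrite ltnS leqn0 => /eqP Hd0; move: Hd; rewrite Hd0 dvd0n => /eqP Hm. by move: H1; rewrite Hm.
  have := dvdn_leq (ltnW H1) Hd; rewrite leq_eqVlt => /orP [/eqP ->|Hdm]; first by rewrite eqxx orbT.
  have := H2 d Hdm. rewrite /primeBody den_tif den_tlt den_tconst den_tproj; sm. rewrite Hd1.
  rewrite den_tnot den_tmod !den_tproj; sm; last exact: ltnW.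
  by move: Hd; rewrite /dvdn => ->.
split; first exact: prime_gt1.
apply/eqP/sumF_eq0P => d Hd. rewrite /primeBody den_tif den_tlt den_tconst den_tproj; sm.
case: ifP => // Hd1. rewrite den_tnot den_tmod !den_tproj; sm; last exact: ltnW.
apply/eqP; rewrite eqb0; apply/negP => Hdv.
have /primeP [_ Hdiv] := Hp. have := Hdiv d Hdv. rewrite /= => /orP [/eqP Hd1'|/eqP Hdm].
  by move: Hd1; rewrite Hd1'.
by move: Hd; rewrite Hdm ltnn.
Qed.

Definition npBody := tprime (tadd (tS (tproj 1)) (tproj 0)).
Lemma npBody_ok : mu_ok npBody.
Proof.
move=> rs. have [p Hlt Hp] := prime_above (nth 0 rs 0).
exists (p - (nth 0 rs 0).+1). apply/eqP. apply/eqP; rewrite /npBody den_tprime den_tadd den_tS !den_tproj; sm.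
by rewrite subnKC.
Qed.
Definition tnp x := tadd (tS x) (tmu npBody_ok [:: x]).
Arguments tnp : simpl never.
Definition npF x := x.+1 + muF npBody_ok [:: x].
Lemma den_tnp x a : den (tnp x) a = npF (den x a).
Proof. by rewrite /tnp den_tadd den_tS den_tmu. Qed.
Lemma npF_spec x : x < npF x /\ prime (npF x).
Proof.
split; first by rewrite /npF; apply: leq_addr.
have [H _] := muF_spec npBody_ok [:: x]. move/eqP: H.
by rewrite /npBody den_tprime den_tadd den_tS !den_tproj.
Qed.

Fixpoint qF n := match n with 0 => 2 | k.+1 => npF (qF k) end.
Definition tq n := trec (tconst 2) (tnp (tproj 1)) n [::].
Arguments tq : simpl never.
Lemma den_tq n a : den (tq n) a = qF (den n a).
Proof.
rewrite /tq den_trec. elim: (den n a) => [|k IH]; first by rewrite precF0 den_tconst.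
by rewrite precFS den_tnp den_tproj; sm; rewrite IH.
Qed.
Lemma qF_prime n : prime (qF n).
Proof. case: n => //= n. exact: (npF_spec _).2. Qed.
Lemma qF_lt m n : m < n -> qF m < qF n.
Proof.
elim: n => // n IH. rewrite ltnS leq_eqVlt => /orP [/eqP ->|/IH H]; first exact: (npF_spec _).1.
apply: ltn_trans H (npF_spec _).1.
Qed.
Lemma qF_inj m n : qF m = qF n -> m = n.
Proof.
move=> H. case: (ltngtP m n) => // /qF_lt; rewrite H ltnn //.
Qed.

Lemma pmin_tot (B : tprf) args : (exists n, peval (PMin B) args n) <-> exists t, den B (t :: args) = 0.
Proof.
split => [[n Hn]|[t Ht]].
  inversion Hn as [| | | | | |? ? ? Hz Hlt]; subst. exists n. exact: (peval_det (tp_ok B _) Hz).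
have Ex : exists t, den B (t :: args) == 0 by exists t; apply/eqP.
case: (ex_minnP Ex) => n /eqP Hn Hmin. exists n. constructor.
  by rewrite -Hn; exact: tp_ok.
move=> m Hm. exists (den B (m :: args)).-1. rewrite prednK; first exact: tp_ok.
rewrite lt0n; apply/negP => /Hmin; by rewrite leqNgt Hm.
Qed.

Definition searchBody (e : prf) (D Q : tprf) : tprf :=
  (* env: t :: x,  t = cpair s (cpair c v) *)
  tadd (tcomp D [:: tfst (tproj 0); tproj 1])
       (tcomp (chk e) [:: tfst (tsnd (tproj 0)); tcons (tcomp Q [:: tfst (tproj 0); tproj 1]) tzero;
                          tsnd (tsnd (tproj 0))]).

Lemma ce_search (e : prf) (D Q : tprf) :
  ce (fun x => exists s, den D [:: s; x] = 0 /\ exists v, peval e [:: den Q [:: s; x]] v).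
Proof.
exists (PMin (searchBody e D Q)) => x. rewrite pmin_tot.
split.
  move=> [s [Hd /chk_spec [c [v Hc]]]].
  exists (cpair s (cpair c v)). rewrite /searchBody den_tadd !den_tcomp; sm.
  rewrite !den_tfst !den_tsnd den_tcons den_tcomp den_tzero; sm. rewrite !den_tfst !den_tproj; sm.
  rewrite !(fstc_cpair, sndc_cpair) Hd add0n. exact: Hc.
move=> [t]. rewrite /searchBody den_tadd !den_tcomp; sm.
rewrite !den_tfst !den_tsnd den_tcons den_tcomp den_tzero; sm. rewrite !den_tfst !den_tproj; sm.
move/eq0_add => [Hd Hc]. exists (fstc t); split => //.
apply/chk_spec. by exists (fstc (sndc t)), (sndc (sndc t)).
Qed.

Definition isz (n : nat) : bool := n == 0.
Arguments isz : simpl never.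
Lemma isz_add m n : isz (m + n) = isz m && isz n. Proof. by rewrite /isz addn_eq0. Qed.

Lemma Sadd_ex : {F : tprf -> tprf -> tprf | forall x y a, den (F x y) a = den x a + den y a}.
Proof. exists tadd; exact: den_tadd. Qed.
Definition Sadd := sval Sadd_ex.
Lemma den_Sadd x y a : den (Sadd x y) a = den x a + den y a. Proof. exact: (svalP Sadd_ex). Qed.
Lemma isz_Sadd x y a : isz (den (Sadd x y) a) = isz (den x a) && isz (den y a).
Proof. by rewrite den_Sadd isz_add. Qed.

Lemma Smul_ex : {F : tprf -> tprf -> tprf | forall x y a, den (F x y) a = den x a * den y a}.
Proof. exists tmul; exact: den_tmul. Qed.
Definition Smul := sval Smul_ex.
Lemma den_Smul x y a : den (Smul x y) a = den x a * den y a. Proof. exact: (svalP Smul_ex). Qed.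

Lemma Ssub_ex : {F : tprf -> tprf -> tprf | forall x y a, den (F x y) a = den x a - den y a}.
Proof. exists tsub; exact: den_tsub. Qed.
Definition Ssub := sval Ssub_ex.
Lemma den_Ssub x y a : den (Ssub x y) a = den x a - den y a. Proof. exact: (svalP Ssub_ex). Qed.

Lemma Sconst_ex : {F : nat -> tprf | forall k a, den (F k) a = k}.
Proof. exists tconst; exact: den_tconst. Qed.
Definition Sconst := sval Sconst_ex.
Lemma den_Sconst k a : den (Sconst k) a = k. Proof. exact: (svalP Sconst_ex). Qed.

Lemma SS_ex : {F : tprf -> tprf | forall x a, den (F x) a = (den x a).+1}.
Proof. exists tS; exact: den_tS. Qed.
Definition SS := sval SS_ex.
Lemma den_SS x a : den (SS x) a = (den x a).+1. Proof. exact: (svalP SS_ex). Qed.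

Lemma Sfst_ex : {F : tprf -> tprf | forall x a, den (F x) a = fstc (den x a)}.
Proof. exists tfst; exact: den_tfst. Qed.
Definition Sfst := sval Sfst_ex.
Lemma den_Sfst x a : den (Sfst x) a = fstc (den x a). Proof. exact: (svalP Sfst_ex). Qed.

Lemma Ssnd_ex : {F : tprf -> tprf | forall x a, den (F x) a = sndc (den x a)}.
Proof. exists tsnd; exact: den_tsnd. Qed.
Definition Ssnd := sval Ssnd_ex.
Lemma den_Ssnd x a : den (Ssnd x) a = sndc (den x a). Proof. exact: (svalP Ssnd_ex). Qed.

Lemma Scpair_ex : {F : tprf -> tprf -> tprf | forall x y a, den (F x y) a = cpair (den x a) (den y a)}.
Proof. exists tcpair; exact: den_tcpair. Qed.
Definition Scpair := sval Scpair_ex.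
Lemma den_Scpair x y a : den (Scpair x y) a = cpair (den x a) (den y a). Proof. exact: (svalP Scpair_ex). Qed.

Lemma Scons_ex : {F : tprf -> tprf -> tprf | forall x y a, den (F x y) a = (cpair (den x a) (den y a)).+1}.
Proof. exists tcons; exact: den_tcons. Qed.
Definition Scons := sval Scons_ex.
Lemma den_Scons x y a : den (Scons x y) a = (cpair (den x a) (den y a)).+1. Proof. exact: (svalP Scons_ex). Qed.

Lemma Snth_ex : {F : tprf -> tprf -> tprf | forall i c a, den (F i c) a = nthc (den i a) (den c a)}.
Proof. exists tnthc; exact: den_tnthc. Qed.
Definition Snth := sval Snth_ex.
Lemma den_Snth i c a : den (Snth i c) a = nthc (den i a) (den c a). Proof. exact: (svalP Snth_ex). Qed.

Definition sizeF c := muF sizebody_ok [:: c].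
Lemma sizeF_code s : sizeF (code_seq s) = size s.
Proof. have := @den_tsizec_code (tproj 0) [:: code_seq s] s erefl. by []. Qed.
Lemma Ssize_ex : {F : tprf -> tprf | forall c a, den (F c) a = sizeF (den c a)}.
Proof. by exists tsizec. Qed.
Definition Ssize := sval Ssize_ex.
Lemma den_Ssize c a : den (Ssize c) a = sizeF (den c a). Proof. exact: (svalP Ssize_ex). Qed.

Lemma Smod_ex : {F : tprf -> tprf -> tprf | forall x p a, 0 < den p a -> den (F x p) a = den x a %% den p a}.
Proof. exists tmod; exact: den_tmod. Qed.
Definition Smod := sval Smod_ex.
Lemma den_Smod x p a : 0 < den p a -> den (Smod x p) a = den x a %% den p a. Proof. exact: (svalP Smod_ex). Qed.

Lemma Sif_ex : {F : tprf -> tprf -> tprf -> tprf | forall t x y a,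
   den (F t x y) a = if den t a == 0 then den x a else den y a}.
Proof. exists tif; exact: den_tif. Qed.
Definition Sif := sval Sif_ex.
Lemma den_Sif t x y a : den (Sif t x y) a = if den t a == 0 then den x a else den y a.
Proof. exact: (svalP Sif_ex). Qed.
Lemma isz_Sif t x y a : isz (den (Sif t x y) a) = if isz (den t a) then isz (den x a) else isz (den y a).
Proof. rewrite den_Sif /isz; by case: ifP. Qed.

Lemma Seq_ex : {F : tprf -> tprf -> tprf | forall x y a, isz (den (F x y) a) = (den x a == den y a)}.
Proof. exists teq; exact: den_teq. Qed.
Definition Seq := sval Seq_ex.
Lemma isz_Seq x y a : isz (den (Seq x y) a) = (den x a == den y a). Proof. exact: (svalP Seq_ex). Qed.

Lemma Sle_ex : {F : tprf -> tprf -> tprf | forall x y a, isz (den (F x y) a) = (den x a <= den y a)}.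
Proof. exists tle; exact: den_tle. Qed.
Definition Sle := sval Sle_ex.
Lemma isz_Sle x y a : isz (den (Sle x y) a) = (den x a <= den y a). Proof. exact: (svalP Sle_ex). Qed.

Lemma Slt_ex : {F : tprf -> tprf -> tprf | forall x y a, isz (den (F x y) a) = (den x a < den y a)}.
Proof. exists tlt; exact: den_tlt. Qed.
Definition Slt := sval Slt_ex.
Lemma isz_Slt x y a : isz (den (Slt x y) a) = (den x a < den y a). Proof. exact: (svalP Slt_ex). Qed.

Lemma Snot_ex : {F : tprf -> tprf | forall x a, isz (den (F x) a) = ~~ isz (den x a)}.
Proof. exists tnot => x a; rewrite /isz den_tnot; by case: (den x a == 0). Qed.
Definition Snot := sval Snot_ex.
Lemma isz_Snot x a : isz (den (Snot x) a) = ~~ isz (den x a). Proof. exact: (svalP Snot_ex). Qed.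

Lemma Sprime_ex : {F : tprf -> tprf | forall x a, isz (den (F x) a) = prime (den x a)}.
Proof. exists tprime; exact: den_tprime. Qed.
Definition Sprime := sval Sprime_ex.
Lemma isz_Sprime x a : isz (den (Sprime x) a) = prime (den x a). Proof. exact: (svalP Sprime_ex). Qed.

Lemma Sq_ex : {F : tprf -> tprf | forall x a, den (F x) a = qF (den x a)}.
Proof. exists tq; exact: den_tq. Qed.
Definition Sq := sval Sq_ex.
Lemma den_Sq x a : den (Sq x) a = qF (den x a). Proof. exact: (svalP Sq_ex). Qed.

Lemma Sbsum_ex : {F : tprf -> tprf -> seq tprf -> tprf | forall B N Rs a,
  den (F B N Rs) a = sumF (fun i => den B (i :: map (fun R => den R a) Rs)) (den N a)}.
Proof. exists tbsum; exact: den_tbsum. Qed.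
Definition Sbsum := sval Sbsum_ex.
Lemma den_Sbsum B N Rs a : den (Sbsum B N Rs) a = sumF (fun i => den B (i :: map (fun R => den R a) Rs)) (den N a).
Proof. exact: (svalP Sbsum_ex). Qed.
Lemma isz_SbsumP B N Rs a : isz (den (Sbsum B N Rs) a) <->
  forall i, i < den N a -> isz (den B (i :: map (fun R => den R a) Rs)).
Proof.
rewrite den_Sbsum /isz. split => [/eqP /sumF_eq0P H i Hi|H]; first by apply/eqP/H.
apply/eqP/sumF_eq0P => i Hi; apply/eqP; exact: H.
Qed.

Definition polB (b : nat) (h : bool) := if b == 1 then h else ~~ h.
Definition polT (B H : tprf) := Sif (Seq B (Sconst 1)) H (Snot H).
Lemma isz_polT B H a : isz (den (polT B H) a) = polB (den B a) (isz (den H a)).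
Proof. by rewrite /polT isz_Sif isz_Seq den_Sconst isz_Snot. Qed.
Lemma isz_Sconst1 a : isz (den (Sconst 1) a) = false. Proof. by rewrite den_Sconst. Qed.
Lemma isz_Sconst0 a : isz (den (Sconst 0) a) = true. Proof. by rewrite den_Sconst. Qed.
Lemma isz_tproj i a : isz (den (tproj i) a) = (nth 0 a i == 0). Proof. by []. Qed.

Section Lit.
Variables X P : tprf.
Let LB := Sfst X.
Let LK := Sfst (Ssnd X).
Let LBo := Ssnd (Ssnd X).
Let LA := Sfst LBo.
Let LC := Ssnd LBo.
Let Lx j := Snth (Sconst j) LC.
Definition eqPart := Sadd (Slt LA P) (Sadd (Slt LC P) (polT LB (Seq LA LC))).
Definition sizeOk := Sif (Sle LA (Sconst 1)) (Seq (Ssize LC) (Sconst 3))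
                       (Sif (Sle LA (Sconst 3)) (Seq (Ssize LC) (Sconst 1)) (Sconst 1)).
Definition constsOk := Sif (Sle LA (Sconst 1)) (Sadd (Slt (Lx 0) P) (Sadd (Slt (Lx 1) P) (Slt (Lx 2) P)))
                        (Slt (Lx 0) P).
Definition holdsT := Sif (Seq LA (Sconst 0)) (Seq (Smod (Sadd (Lx 0) (Lx 1)) P) (Lx 2))
                     (Sif (Seq LA (Sconst 1)) (Seq (Smod (Smul (Lx 0) (Lx 1)) P) (Lx 2))
                     (Sif (Seq LA (Sconst 2)) (Seq (Lx 0) (Sconst 0)) (Seq (Lx 0) (Sconst 1)))).
Definition relPart := Sadd sizeOk (Sadd constsOk (polT LB holdsT)).
Definition tlit := Sadd (Sle LB (Sconst 1))
   (Sif (Seq LK (Sconst 0)) eqPart (Sif (Seq LK (Sconst 1)) relPart (Sconst 1))).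
End Lit.

Definition holdsB i (ac p : nat) :=
  if i == 0 then (nthc 0 ac + nthc 1 ac) %% p == nthc 2 ac
  else if i == 1 then (nthc 0 ac * nthc 1 ac) %% p == nthc 2 ac
  else if i == 2 then nthc 0 ac == 0 else nthc 0 ac == 1.
Definition litB (x p : nat) :=
  (fstc x <= 1) && (if fstc (sndc x) == 0 then
       [&& fstc (sndc (sndc x)) < p, sndc (sndc (sndc x)) < p & polB (fstc x) (fstc (sndc (sndc x)) == sndc (sndc (sndc x)))]
              else if fstc (sndc x) == 1 then
                [&& (if fstc (sndc (sndc x)) <= 1 then sizeF (sndc (sndc (sndc x))) == 3
                     else if fstc (sndc (sndc x)) <= 3 then sizeF (sndc (sndc (sndc x))) == 1 else false),
                    (if fstc (sndc (sndc x)) <= 1 then [&& nthc 0 (sndc (sndc (sndc x))) < p,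
                         nthc 1 (sndc (sndc (sndc x))) < p & nthc 2 (sndc (sndc (sndc x))) < p]
                     else nthc 0 (sndc (sndc (sndc x))) < p) &
                    polB (fstc x) (holdsB (fstc (sndc (sndc x))) (sndc (sndc (sndc x))) p)]
              else false).

Ltac iszs := rewrite ?(isz_polT, isz_Sif, isz_Seq, isz_Sle, isz_Slt, isz_Snot, isz_Sconst1, isz_Sadd,
   den_Sfst, den_Ssnd, den_Sconst, den_Snth, den_Smul, den_Sadd, den_Ssize).

Lemma isz_tlit X P a : 0 < den P a -> isz (den (tlit X P) a) = litB (den X a) (den P a).
Proof.
move=> Hp. rewrite /tlit /eqPart /relPart /sizeOk /constsOk /holdsT.
iszs. rewrite !den_Smod //. iszs. by [].
Qed.

Lemma Forall_allP (P : pred nat) s : List.Forall (fun x => P x) s <-> all P s.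
Proof.
elim: s => [|x s IH] /=; first by split.
split => [H|/andP [H1 H2]]; last by constructor => //; apply/IH.
inversion H; subst. by rewrite H2 (proj1 IH H3).
Qed.

Lemma polB_bool (b : bool) h : polB (nat_of_bool b) h = if b then h else ~~ h.
Proof. by case: b. Qed.

Lemma litB_diag l p : 0 < p -> litB (code_lit l) p <-> diag L_field (Zp_struct p) l.
Proof.
move=> Hp. case: l => b [x y | i args]; rewrite /litB /code_lit /code_atom !(fstc_cpair, sndc_cpair) polB_bool;
  rewrite /diag /wf_lit /wf_atom /holds /consts /=.
- have -> : (nat_of_bool b <= 1) = true by case: b.
  rewrite /=. split.
    move=> /and3P [Hx Hy Hb]. split => //. split; first by apply/Forall_allP => /=; rewrite Hx Hy.
    by case: b Hb => [/eqP|/eqP].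
  move=> [_ [/Forall_allP /= /and3P [Hx Hy _] Hb]]. rewrite Hx Hy /=.
  by case: b Hb => [->|/eqP]; rewrite ?eqxx.
- have -> : (nat_of_bool b <= 1) = true by case: b.
  rewrite /= sizeF_code !nthc_code /holdsB !nthc_code.
  case: i => [|[|[|[|i]]]] /=; last by split => // -[[]].
  all: case: args => [|a0 [|a1 [|a2 [|a3 args]]]] /=; try by split => // -[[_ H]].
  all: rewrite polB_bool; split;
   [ case/andP => Hc Hh; split; [done|split; [apply/Forall_allP; rewrite /= ?andbT; exact Hc| ]];
     case: b Hh => /= [/eqP //| /eqP //]
   | case=> [_ [/Forall_allP Hc Hh]]; apply/andP; split; [rewrite /= ?andbT in Hc; exact Hc|];
     case: b Hh => /= [->|/eqP] // ].
Qed.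

Lemma Forall_map_iff (P : nat -> Prop) (f : nat -> nat) (s : seq nat) : List.Forall P (map f s) <-> List.Forall (fun x => P (f x)) s.
Proof.
elim: s => [|x s IH] /=; first by split.
split => H; inversion H; subst; constructor => //; exact/IH.
Qed.

Lemma Forall_impl' (P Q : nat -> Prop) (s : seq nat) : (forall x, P x -> Q x) -> List.Forall P s -> List.Forall Q s.
Proof. move=> H; elim=> //= x s' Hx _ IH; constructor; auto. Qed.

Lemma map_eq_in (f g : nat -> nat) (P : nat -> Prop) (s : seq nat) : (forall x, P x -> f x = g x) -> List.Forall P s -> map f s = map g s.
Proof. move=> H; elim=> //= x s' Hx _ ->; by rewrite H. Qed.

Lemma iso_refl L A : iso L A A.
Proof.
exists id; split => // ; split => //; split; first by move=> y Hy; exists y.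
move=> i args _ _ _; by rewrite map_id.
Qed.

Lemma iso_sym L A B : iso L A B -> iso L B A.
Proof.
case=> f [H1 [H2 [H3 H4]]].
have Hex : forall y, exists x, dom B y -> dom A x /\ f x = y.
  move=> y; case: (classic (dom B y)) => Hy.
    by case: (H3 y Hy) => x Hx; exists x.
  by exists 0.
pose g y := proj1_sig (constructive_indefinite_description _ (Hex y)).
have Hg : forall y, dom B y -> dom A (g y) /\ f (g y) = y.
  move=> y; exact: (proj2_sig (constructive_indefinite_description _ (Hex y))).
exists g; split; first by move=> y /Hg [].
split; first by move=> y y' Hy Hy' E; rewrite -(Hg _ Hy).2 -(Hg _ Hy').2 E.
split.
  move=> x Hx; exists (f x); split; first exact: H1.
  have [Ha Hb] := Hg _ (H1 _ Hx). exact: H2.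
move=> i args Hi Hs Hd.
have Hd' : List.Forall (dom A) (map g args).
  apply/Forall_map_iff; apply: Forall_impl' Hd => y /Hg []//.
have Hsz : size (map g args) = nth 0 L i by rewrite size_map.
rewrite (H4 _ _ Hi Hsz Hd') -map_comp.
rewrite (@map_eq_in (f \o g) id (dom B) args) ?map_id //.
by move=> y /Hg [].
Qed.

Lemma iso_trans L A B C : iso L A B -> iso L B C -> iso L A C.
Proof.
case=> f [F1 [F2 [F3 F4]]] [g [G1 [G2 [G3 G4]]]].
exists (g \o f); split; first by move=> x /F1 /G1.
split; first by move=> x y Hx Hy /= /G2 E; apply: F2 => //; apply: E; apply: F1.
split.
  move=> z /G3 [y [Hy <-]]. case: (F3 _ Hy) => x [Hx <-]. by exists x.
move=> i args Hi Hs Hd. rewrite map_comp.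
have Hd' : List.Forall (dom B) (map f args) by apply/Forall_map_iff; apply: Forall_impl' Hd.
rewrite (F4 _ _ Hi Hs Hd) (G4 _ _ Hi _ Hd') // size_map //.
Qed.

Lemma diag_iso L A B : (forall l, diag L A l <-> diag L B l) -> iso L A B.
Proof.
move=> H.
have Hdom : forall x, dom A x <-> dom B x.
  move=> x; split => Hx.
    have /H [_ [Hf _]] : diag L A (true, AEq x x) by split => //; split => //; repeat constructor.
    by inversion Hf.
  have /H [_ [Hf _]] : diag L B (true, AEq x x) by split => //; split => //; repeat constructor.
  by inversion Hf.
exists id; split; first by move=> x /Hdom.
split => //; split; first by move=> y /Hdom Hy; exists y.
move=> i args Hi Hs Hd; rewrite map_id.
have Hd' : List.Forall (dom B) args by apply: Forall_impl' Hd => x /Hdom.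
split => Hr.
  by have /H [_ [_ ]] : diag L A (true, ARel i args) by [].
have : ~ diag L A (false, ARel i args).
  by move=> /H [_ [_ /= Hn]].
move=> Hn. apply: NNPP => Hr'. apply: Hn. by [].
Qed.

Lemma phi_image_same L L' Phi A B B' : phi_image L L' Phi A B -> phi_image L L' Phi A B' -> iso L' B B'.
Proof. move=> H1 H2; apply: diag_iso => l; rewrite -H1 -H2; by []. Qed.

Definition chain (zs : seq nat) : seq literal :=
  (true, ARel 3 [:: nth 0 zs 0]) :: (true, ARel 2 [:: last 0 zs]) ::
  [seq (true, ARel 0 [:: nth 0 zs k; nth 0 zs 0; nth 0 zs k.+1]) | k <- iota 0 (size zs).-1].

Lemma Forall_map_in (T : Type) (P : T -> Prop) (f : nat -> T) s :
  List.Forall P (map f s) <-> forall k, k \in s -> P (f k).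
Proof.
elim: s => [|x s IH] /=; first by split.
split => [H k|H].
  inversion H; subst. rewrite in_cons => /orP [/eqP ->//|Hk]. exact: (proj1 IH H3).
constructor; first by apply: H; rewrite in_cons eqxx.
apply/IH => k Hk; apply: H; by rewrite in_cons Hk orbT.
Qed.

Lemma ltn_pred n : 0 < n -> n.-1 < n. Proof. by case: n. Qed.

Lemma chain_div A p zs : prime p -> iso L_field A (Zp_struct p) ->
  List.Forall (diag L_field A) (chain zs) -> 0 < size zs -> p %| size zs.
Proof.
move=> Hp [f [F1 [F2 [F3 F4]]]] Hc Hsz.
have Hp1 := prime_gt1 Hp.
inversion Hc as [|? ? H3 Hc']; subst. inversion Hc' as [|? ? H2 Hc'']; subst.
move/Forall_map_in: Hc'' => H0.
have relI : forall i args, diag L_field A (true, ARel i args) -> Defs.rel (Zp_struct p) i (map f args).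
  move=> i args [[Hi Hs] [Hd Hr]]. by apply/(F4 _ _ Hi Hs Hd).
have W0 : f (nth 0 zs 0) = 1 by have := relI _ _ H3.
have Wl : f (last 0 zs) = 0 by have := relI _ _ H2.
have Wk : forall k, k < (size zs).-1 -> f (nth 0 zs k.+1) = (f (nth 0 zs k) + f (nth 0 zs 0)) %% p.
  move=> k Hk. have := relI _ _ (H0 k _). rewrite mem_iota add0n => /(_ Hk) /=. by move=> ->.
have Hw : forall k, k < size zs -> f (nth 0 zs k) = k.+1 %% p.
  elim=> [|k IH] Hk; first by rewrite W0 modn_small.
  rewrite Wk; last by rewrite -ltnS prednK.
  rewrite IH ?W0; last exact: ltnW.
  by rewrite modnDml addn1.
have := Hw _ (ltn_pred Hsz). rewrite nth_last Wl prednK //.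
by move/esym/eqP; rewrite -/(dvdn p (size zs)).
Qed.


Lemma chain_exists A p : prime p -> iso L_field A (Zp_struct p) ->
  exists zs, size zs = p /\ uniq zs /\ List.Forall (diag L_field A) (chain zs).
Proof.
move=> Hp /iso_sym [g [G1 [G2 [G3 G4]]]].
have Hp1 := prime_gt1 Hp. have Hp0 : 0 < p by apply: ltnW.
pose zs := [seq g (k.+1 %% p) | k <- iota 0 p].
have Hsz : size zs = p by rewrite size_map size_iota.
have Hn : forall k, k < p -> nth 0 zs k = g (k.+1 %% p).
  by move=> k Hk; rewrite (nth_map 0) ?size_iota // nth_iota.
have Hdom : forall x, x < p -> dom A (g x) by move=> x Hx; apply: G1.
have relI : forall i args, i < 4 -> size args = nth 0 L_field i -> all (fun x => x < p) args ->
   Defs.rel (Zp_struct p) i args -> diag L_field A (true, ARel i (map g args)).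
  move=> i args Hi Hs Ha Hr. split; first by split => //; rewrite size_map.
  split.
    apply/Forall_map_iff. elim: args Ha {Hs Hr} => [|x s IH] //= /andP [Hx Hs].
    constructor; [exact: Hdom | exact: IH].
  rewrite /=. apply/(G4 _ _ Hi Hs) => //.
  elim: args Ha {Hs Hr} => [|x s IH] //= /andP [Hx Hs]. by constructor => //; apply: IH.
exists zs; split => //; split.
  have -> : zs = map g [seq k.+1 %% p | k <- iota 0 p] by rewrite /zs -map_comp.
  rewrite map_inj_in_uniq.
    have -> : p = p.-1 + 1 by rewrite addn1 prednK.
    rewrite iotaD map_cat cat_uniq /= add0n.
    have -> : [seq k.+1 %% (p.-1 + 1) | k <- iota 0 p.-1] = iota 1 p.-1.
      have := iotaDl 1 0 p.-1; rewrite addn0 => ->.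
      apply/eq_in_map => k; rewrite mem_iota add0n => /= Hk. rewrite add1n modn_small // addn1 prednK //. apply: (leq_ltn_trans Hk); exact: ltn_pred.
    by rewrite iota_uniq addn1 prednK // modnn mem_iota.
  move=> x y /mapP [k _ ->] /mapP [k' _ ->] /G2 H.
  apply: H; rewrite /dom /Zp_struct ltn_pmod //.
apply/List.Forall_cons.
  rewrite Hn //; apply: (relI 3 [:: 1 %% p]) => //=; rewrite ?ltn_pmod // modn_small //.
apply/List.Forall_cons.
  rewrite -nth_last Hsz Hn; last exact: ltn_pred.
  rewrite prednK // modnn. by apply: (relI 2 [:: 0]) => //=; rewrite andbT.
apply/Forall_map_in => k; rewrite mem_iota add0n Hsz => Hk.
have Hk' : k < p by apply: leq_trans Hk (leq_pred p).
have Hk2 : k.+1 < p by apply: (leq_ltn_trans Hk); exact: ltn_pred.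
rewrite !Hn //.
apply: (relI 0 [:: k.+1 %% p; 1 %% p; k.+2 %% p]) => //=; rewrite ?ltn_pmod //.
by rewrite modnDm addn1.
Qed.

Lemma Zp_iso_eq p p' : prime p -> prime p' -> iso L_field (Zp_struct p) (Zp_struct p') -> p = p'.
Proof.
move=> Hp Hp' Hi.
have [zs [Hs [_ Hc]]] := chain_exists Hp (iso_refl _ _).
have := chain_div Hp' Hi Hc. rewrite Hs => /(_ (prime_gt0 Hp)).
have H1 : p' != 1 by rewrite neq_ltn prime_gt1 ?orbT.
by move/(prime_nt_dvdP Hp H1) => ->.
Qed.

Lemma ce_ext (P Q : nat -> Prop) : ce P -> (forall n, P n <-> Q n) -> ce Q.
Proof. move=> [e He] H; exists e => n; rewrite -H; exact: He. Qed.

Lemma Forall_nthP (T : Type) (d : T) (P : T -> Prop) s :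
  List.Forall P s <-> forall i, i < size s -> P (nth d s i).
Proof.
elim: s => [|x s IH] /=; first by split.
split => [H [|i] Hi|H]; first by inversion H.
  inversion H; subst; exact: (proj1 IH H3).
constructor; first exact: (H 0). apply/IH => i Hi; exact: (H i.+1).
Qed.

Definition tlits A P := Sbsum (tlit (Snth (tproj 0) (tproj 1)) (tproj 2)) (Ssize A) [:: A; P].

Lemma tlits_spec A P env alpha p : den A env = code_seq (map code_lit alpha) -> den P env = p -> 0 < p ->
  isz (den (tlits A P) env) <-> List.Forall (diag L_field (Zp_struct p)) alpha.
Proof.
move=> HA HP Hp. rewrite /tlits isz_SbsumP den_Ssize HA sizeF_code size_map.
rewrite (Forall_nthP (true, AEq 0 0)).
split => H i Hi; have := H i Hi.
  rewrite isz_tlit; last by rewrite den_tproj; sm; rewrite HP.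
  rewrite den_Snth !den_tproj; sm; rewrite HA HP.
  by rewrite nthc_code (nth_map (true, AEq 0 0)) // => /(litB_diag _ Hp).
move=> Hd. rewrite isz_tlit; last by rewrite den_tproj; sm; rewrite HP.
rewrite den_Snth !den_tproj; sm; rewrite HA HP.
by rewrite nthc_code (nth_map (true, AEq 0 0)) //; apply/litB_diag.
Qed.

Lemma code_seq_inj0 s s' : code_seq s = code_seq s' -> s = s'.
Proof. elim: s s' => [|z s IH] [|z' s'] //= [] /cpair_inj [-> /IH ->] //. Qed.

Lemma code_atom_inj a a' : code_atom a = code_atom a' -> a = a'.
Proof.
case: a a' => [x y|i s] [x' y'|i' s'] /= /cpair_inj [H0 /cpair_inj [H1 H2]] //.
  by rewrite H1 H2.
by rewrite H1 (code_seq_inj0 H2).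
Qed.

Lemma code_lit_inj l l' : code_lit l = code_lit l' -> l = l'.
Proof.
case: l l' => b a [b' a'] /cpair_inj [Hb Ha].
have Ea : a = a' by apply: code_atom_inj.
rewrite Ea; clear Ha Ea; by move: Hb; case: b; case: b'.
Qed.

Lemma code_seq_inj s s' : code_seq s = code_seq s' -> s = s'.
Proof. elim: s s' => [|z s IH] [|z' s'] //= [] /cpair_inj [-> /IH ->] //. Qed.

Lemma map_code_lit_inj s s' : map code_lit s = map code_lit s' -> s = s'.
Proof. elim: s s' => [|z s IH] [|z' s'] //= [] /code_lit_inj -> /IH -> //. Qed.

Lemma dirLR L K : iso_closed L K -> le_c L_field L PF K ->
  exists C, subclass L C K /\ infinitely_many_iso_types L C /\
            exists E, friedberg_enumeration L C E.
Proof.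
move=> HK [Phi [[Hce [Hwf Himg]] Hemb]].
pose E (y : nat * literal) := exists alpha, Phi (alpha, y.2) /\ List.Forall (diag L_field (Zp_struct (qF y.1))) alpha.
have HPF : forall n, PF (Zp_struct (qF n)) by move=> n; exists (qF n); split; [exact: qF_prime | exact: iso_refl].
have Hinj : forall n m Bn Bm, phi_image L_field L Phi (Zp_struct (qF n)) Bn ->
    phi_image L_field L Phi (Zp_struct (qF m)) Bm -> iso L Bn Bm -> n = m.
  move=> n m Bn Bm Hn Hm Hi. have := (Hemb _ _ _ _ (HPF n) (HPF m) Hn Hm).2 Hi.
  move/(Zp_iso_eq (qF_prime n) (qF_prime m)). exact: qF_inj.
pose C B := exists n B0, phi_image L_field L Phi (Zp_struct (qF n)) B0 /\ iso L B0 B.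
exists C. split; [split|split].
- move=> A B [n [B0 [H1 H2]]] H3. exists n, B0; split => //; exact: iso_trans H2 H3.
- move=> B [n [B0 [H1 H2]]]. have [B1 [HK1 H1']] := Himg _ (HPF n).
  apply: HK HK1 _. apply: iso_trans _ H2. exact: phi_image_same H1' H1.
- move=> N. have Hex : forall i, exists B, phi_image L_field L Phi (Zp_struct (qF i)) B.
    by move=> i; have [B [_ HB]] := Himg _ (HPF i); exists B.
  pose f i := proj1_sig (constructive_indefinite_description _ (Hex i)).
  have Hf : forall i, phi_image L_field L Phi (Zp_struct (qF i)) (f i).
    move=> i; exact: (proj2_sig (constructive_indefinite_description _ (Hex i))).
  exists f; split; first by move=> i _; exists i, (f i); split; [exact: Hf | exact: iso_refl].
  move=> i j _ _; exact: Hinj (Hf i) (Hf j).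
- exists E. split; [split; [|split]|].
  + case: Hce => e He.
    apply: ce_ext (ce_search e (tlits (tproj 0) (Sq (Sfst (tproj 1)))) (Scpair (tproj 0) (Ssnd (tproj 1)))) _.
    move=> m. split.
      move=> [s [Hd [v Hv]]].
      have [[alpha l] [Hx HPhi]] : exists x, code_rule x = den (Scpair (tproj 0) (Ssnd (tproj 1))) [:: s; m] /\ Phi x.
        by apply/He; exists v.
      rewrite den_Scpair den_Ssnd !den_tproj /code_rule /= in Hx. sm.
      case/cpair_inj: Hx => Hs Hl.
      exists (fstc m, l); split; first by rewrite /code_enum /= Hl cpair_surj.
      exists alpha; split => //=.
      have HA : den (tproj 0) [:: s; m] = code_seq (map code_lit alpha) by rewrite den_tproj /= -Hs.
      have HP : den (Sq (Sfst (tproj 1))) [:: s; m] = qF (fstc m) by rewrite den_Sq den_Sfst den_tproj.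
      apply: (proj1 (tlits_spec HA HP (prime_gt0 (qF_prime _)))). exact/eqP.
    move=> [[n l] [Hm [alpha [HPhi Hall]]]]. rewrite /code_enum /= in Hm.
    exists (code_seq (map code_lit alpha)); split.
      have HA : den (tproj 0) [:: code_seq (map code_lit alpha); m] = code_seq (map code_lit alpha) by [].
      have HP : den (Sq (Sfst (tproj 1))) [:: code_seq (map code_lit alpha); m] = qF n.
        by rewrite den_Sq den_Sfst den_tproj /= -Hm fstc_cpair.
      apply/eqP; apply: (proj2 (tlits_spec HA HP (prime_gt0 (qF_prime _)))). exact: Hall.
    apply/He. exists (alpha, l); split => //.
    by rewrite den_Scpair den_Ssnd !den_tproj /= -Hm sndc_cpair.
  + move=> n. have [B [_ HB]] := Himg _ (HPF n). exists B; split; last exact: HB.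
    exists n, B; split => //; exact: iso_refl.
  + move=> A [n [B0 [H1 H2]]]. exists n, B0; split; [exact: H1 | exact: iso_sym].
  + move=> n m An Am Hn Hm Hi. exact: Hinj Hn Hm Hi.
Qed.

Lemma map_shift3 k acc n rest :
  map (fun R => den R (k :: acc :: n :: rest)) [seq tproj j.+3 | j <- iota 0 (size rest)] = rest.
Proof. rewrite -map_comp /comp /=. exact: mkseq_nth. Qed.

Definition tbuild (G N : tprf) (Rs : seq tprf) :=
  trec tzero (Scons (tcomp G (Ssub (Ssub (tproj 2) (Sconst 1)) (tproj 0) :: [seq tproj j.+3 | j <- iota 0 (size Rs)]))
                    (tproj 1)) N (N :: Rs).

Lemma den_tbuild G N Rs a : den (tbuild G N Rs) a =
  code_seq [seq den G (k :: map (fun R => den R a) Rs) | k <- iota 0 (den N a)].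
Proof.
rewrite /tbuild den_trec. set rs := map (fun R => den R a) Rs. cbn [map]. set Nv := den N a.
suff H : forall n, n <= Nv -> precF (den tzero)
   (den (Scons (tcomp G (Ssub (Ssub (tproj 2) (Sconst 1)) (tproj 0) :: [seq tproj j.+3 | j <- iota 0 (size Rs)])) (tproj 1)))
   n (Nv :: rs) = code_seq [seq den G (k :: rs) | k <- iota (Nv - n) n].
  by rewrite H // subnn.
elim=> [|n IH] Hn; first by rewrite precF0.
rewrite precFS den_Scons den_tcomp; sm. rewrite den_Ssub den_Ssub den_Sconst !den_tproj; sm.
rewrite IH; last exact: ltnW.
have -> : size Rs = size rs by rewrite size_map.
rewrite map_shift3.
have E : Nv - n = (Nv - n.+1).+1 by rewrite subnSK.
rewrite E /=. by rewrite -subnDA add1n.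
Qed.

Definition litR (i : nat) (Ac : tprf) := Scpair (Sconst 1) (Scpair (Sconst 1) (Scpair (Sconst i) Ac)).
Lemma den_litR i Ac a args : den Ac a = code_seq args -> den (litR i Ac) a = code_lit (true, ARel i args).
Proof. move=> H. by rewrite /litR !den_Scpair !den_Sconst H. Qed.

Definition chainBody := (* env: k :: c *)
  litR 0 (Scons (Snth (tproj 0) (tproj 1)) (Scons (Snth (Sconst 0) (tproj 1))
          (Scons (Snth (SS (tproj 0)) (tproj 1)) (Sconst 0)))).
Definition chainT (c : tprf) :=
  Scons (litR 3 (Scons (Snth (Sconst 0) c) (Sconst 0)))
 (Scons (litR 2 (Scons (Snth (Ssub (Ssize c) (Sconst 1)) c) (Sconst 0)))
        (tbuild chainBody (Ssub (Ssize c) (Sconst 1)) [:: c])).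

Lemma den_chainT c a zs : den c a = code_seq zs -> den (chainT c) a = code_seq (map code_lit (chain zs)).
Proof.
move=> Hc. rewrite /chainT /chain. cbn [map code_seq].
rewrite den_Scons (@den_litR _ _ _ [:: nth 0 zs 0]); last by rewrite den_Scons den_Snth !den_Sconst Hc nthc_code.
rewrite den_Scons (@den_litR _ _ _ [:: last 0 zs]); last first.
  by rewrite den_Scons den_Snth den_Ssub den_Ssize !den_Sconst Hc sizeF_code nthc_code subn1 nth_last.
rewrite den_tbuild den_Ssub den_Ssize den_Sconst Hc sizeF_code subn1. sm.
rewrite -map_comp. have -> : [seq den chainBody (k :: [:: den c a]) | k <- iota 0 (size zs).-1] =
   [seq (code_lit \o (fun k => (true, ARel 0 [:: nth 0 zs k; nth 0 zs 0; nth 0 zs k.+1]))) k | k <- iota 0 (size zs).-1];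
  last by []. apply: eq_map => k /=.
rewrite /chainBody (@den_litR _ _ _ [:: nth 0 zs k; nth 0 zs 0; nth 0 zs k.+1]) //.
rewrite !den_Scons !den_Snth den_SS den_Sconst !den_tproj; sm. by rewrite Hc !nthc_code.
Qed.

Definition uniqBody := (* env: j :: i :: c *)
  Sif (Seq (tproj 0) (tproj 1)) (Sconst 0) (Snot (Seq (Snth (tproj 0) (tproj 2)) (Snth (tproj 1) (tproj 2)))).
Definition uniqT (c : tprf) :=
  Sbsum (Sbsum uniqBody (Ssize (tproj 1)) [:: tproj 0; tproj 1]) (Ssize c) [:: c].

Lemma isz_uniqT c a zs : den c a = code_seq zs -> isz (den (uniqT c) a) <-> uniq zs.
Proof.
move=> Hc. rewrite /uniqT isz_SbsumP den_Ssize Hc sizeF_code; sm.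
have Hb : forall i j, isz (den uniqBody [:: j; i; code_seq zs]) = (j == i) || (nth 0 zs j != nth 0 zs i).
  move=> i j. rewrite /uniqBody isz_Sif isz_Seq !den_tproj; sm. rewrite isz_Snot isz_Seq !den_Snth !den_tproj; sm.
  rewrite !nthc_code. case: (j == i) => //. by rewrite den_Sconst.
split => H.
  apply/(uniqP 0) => i j Hi Hj Eij. have := H i Hi. rewrite Hc.
  move/isz_SbsumP. rewrite den_Ssize !den_tproj; sm. rewrite sizeF_code => /(_ j Hj).
  rewrite Hb Eij eqxx orbF => /eqP //.
move=> i Hi. rewrite Hc. apply/isz_SbsumP. rewrite den_Ssize !den_tproj; sm. rewrite sizeF_code => j Hj.
rewrite Hb. case: eqP => //= Hne; apply/eqP => E. apply: Hne.
exact: (uniqP 0 H).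
Qed.

Definition idxF (zs : seq nat) (x : nat) := (index x zs).+1 %% size zs.
Definition Fchain (zs : seq nat) : structure :=
  Structure (fun x => x \in zs) (fun i args => Defs.rel (Zp_struct (size zs)) i (map (idxF zs) args)).

Lemma bound_seq (s : seq nat) : exists n, forall x, x \in s -> x < n.
Proof.
elim: s => [|y s [n Hn]]; first by exists 0.
exists (maxn y.+1 n) => x; rewrite in_cons => /orP [/eqP ->|/Hn H].
  by rewrite leq_max leqnn.
by rewrite leq_max H orbT.
Qed.

Lemma Fchain_ok zs : uniq zs -> 1 < size zs ->
  finite_structure (Fchain zs) /\ List.Forall (diag L_field (Fchain zs)) (chain zs).
Proof.
move=> Hu Hq. set q := size zs. have Hq0 : 0 < q by apply: ltnW.
split; first by case: (bound_seq zs) => n Hn; exists n.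
have Hidx : forall k, k < q -> idxF zs (nth 0 zs k) = k.+1 %% q.
  by move=> k Hk; rewrite /idxF index_uniq.
have Hmem : forall k, k < q -> nth 0 zs k \in zs by move=> k Hk; apply: mem_nth.
have relF : forall i args, i < 4 -> size args = nth 0 L_field i -> all (fun x => x \in zs) args ->
   Defs.rel (Zp_struct q) i (map (idxF zs) args) -> diag L_field (Fchain zs) (true, ARel i args).
  move=> i args Hi Hs Ha Hr. split => //. split => //.
  elim: args Ha {Hs Hr} => [|x s IH] //= /andP [Hx Hs]. constructor => //; exact: IH.
apply/List.Forall_cons.
  apply: relF => //=; rewrite ?Hmem //= Hidx // modn_small //.
apply/List.Forall_cons.
  rewrite -nth_last. apply: relF => //=; rewrite ?Hmem ?ltn_pred //= Hidx ?ltn_pred // prednK // modnn //.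
apply/Forall_map_in => k; rewrite mem_iota add0n => Hk.
have Hk1 : k < q by apply: leq_trans Hk (leq_pred q).
have Hk2 : k.+1 < q by apply: (leq_ltn_trans Hk); exact: ltn_pred.
apply: relF => //=; rewrite ?Hmem //= !Hidx //.
by rewrite modnDm addn1.
Qed.

Lemma prime_dvd_eq p q : prime p -> prime q -> p %| q -> p = q.
Proof.
move=> Hp Hq H. have H1 : p != 1 by rewrite neq_ltn prime_gt1 ?orbT.
by move/(prime_nt_dvdP Hq H1): H.
Qed.

Lemma dirRL L K : iso_closed L K ->
  (exists C, subclass L C K /\ infinitely_many_iso_types L C /\
            exists E, friedberg_enumeration L C E) -> le_c L_field L PF K.
Proof.
move=> HK [C [[HCi HCK] [_ [E [[Hce [Hall Hsurj]] Hfr]]]]].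
pose Phi (x : seq literal * literal) :=
  exists zs, x.1 = chain zs /\ uniq zs /\ prime (size zs) /\ E (size zs, x.2).
have Key : forall A p l, prime p -> iso L_field A (Zp_struct p) ->
   ((exists alpha, Phi (alpha, l) /\ List.Forall (diag L_field A) alpha) <-> E (p, l)).
  move=> A p l Hp Hiso; split.
    move=> [alpha [[zs [/= -> [Hu [Hpz HE]]]] Hd]].
    have := chain_div Hp Hiso Hd (prime_gt0 Hpz). move/(prime_dvd_eq Hp Hpz) => Hs.
    by rewrite Hs.
  move=> HE. have [zs [Hs [Hu Hd]]] := chain_exists Hp Hiso.
  exists (chain zs); split => //. exists zs; rewrite Hs; by [].
have Hmem : forall A p B, prime p -> iso L_field A (Zp_struct p) ->
   phi_image L_field L Phi A B -> enum_member L E p B.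
  move=> A p B Hp Hiso Hph l. rewrite -(Key _ _ _ Hp Hiso). exact: Hph.
exists Phi. split; [split; [|split]|].
- case: Hce => e He.
  pose D := Sadd (Seq (chainT (tproj 0)) (Sfst (tproj 1)))
                 (Sadd (uniqT (tproj 0)) (Sprime (Ssize (tproj 0)))).
  pose Q := Scpair (Ssize (tproj 0)) (Ssnd (tproj 1)).
  apply: ce_ext (ce_search e D Q) _ => r.
  have HD : forall zs, isz (den D [:: code_seq zs; r]) <->
     [/\ code_seq (map code_lit (chain zs)) = fstc r, uniq zs & prime (size zs)].
    move=> zs. rewrite /D isz_Sadd isz_Seq isz_Sadd isz_Sprime den_Ssize den_Sfst !den_tproj; sm.
    rewrite (@den_chainT _ _ zs) // sizeF_code.
    split.
      move=> /andP [/eqP H1 /andP [H2 H3]]. split => //. by apply/(isz_uniqT (c := tproj 0) (a := [:: code_seq zs; r])).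
    move=> [H1 H2 H3]. rewrite H1 eqxx H3 andbT /=. by apply/(isz_uniqT (c := tproj 0) (a := [:: code_seq zs; r])).
  split.
    move=> [s [Hd [v Hv]]].
    have [zs Hzs] := code_surj s. subst s.
    have [H1 H2 H3] := proj1 (HD zs) (introT eqP Hd).
    have [[n l] [Hy HE]] : exists y, code_enum y = den Q [:: code_seq zs; r] /\ E y.
      by apply/He; exists v.
    rewrite /Q den_Scpair den_Ssize den_Ssnd !den_tproj /code_enum /= sizeF_code in Hy.
    case/cpair_inj: Hy => Hn Hl. subst n.
    exists (chain zs, l); split.
      by rewrite /code_rule; cbn [fst snd]; rewrite H1 Hl cpair_surj.
    by exists zs.
  move=> [[alpha l] [Hr [zs [/= Ha [Hu [Hpz HE]]]]]]. subst alpha.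
  exists (code_seq zs); split.
    apply/eqP; apply/HD; split => //. by rewrite -Hr /code_rule fstc_cpair.
  apply/He. exists (size zs, l); split => //.
  by rewrite /Q den_Scpair den_Ssize den_Ssnd !den_tproj /= sizeF_code -Hr /code_rule sndc_cpair.
- move=> alpha l [zs [/= -> [Hu [Hpz HE]]]]. split.
    have [F1 F2] := Fchain_ok Hu (prime_gt1 Hpz). by exists (Fchain zs).
  have [A [_ HA]] := Hall (size zs). by have [] := proj1 (HA l) HE.
- move=> A [p [Hp Hiso]]. have [B [HCB HB]] := Hall p.
  exists B; split; first exact: HCK.
  move=> l. rewrite (Key _ _ _ Hp Hiso). exact: HB.
- move=> A A' B B' [p [Hp Hi]] [p' [Hp' Hi']] HB HB'.
  have M := Hmem _ _ _ Hp Hi HB. have M' := Hmem _ _ _ Hp' Hi' HB'.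
  split => H.
    have : iso L_field (Zp_struct p) (Zp_struct p').
      apply: iso_trans (iso_sym Hi) _. exact: iso_trans H Hi'.
    move/(Zp_iso_eq Hp Hp') => Epp. subst p'.
    apply: diag_iso => l. by rewrite -M -M'.
  have Epp := Hfr _ _ _ _ M M' H. subst p'.
  apply: iso_trans Hi _. exact: iso_sym.
Qed.

Theorem theorem3p2 (L : language) (K : structure -> Prop) :
  iso_closed L K ->
  (le_c L_field L PF K <->
   exists C : structure -> Prop,
     subclass L C K /\ infinitely_many_iso_types L C /\
     exists E : nat * literal -> Prop, friedberg_enumeration L C E).
Proof. move=> HK; split; [exact: dirLR | exact: dirRL]. Qed.
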